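(* Let $X,H,M\ge1$ with $X^{1/3}\le H\le X$ and $M\le C_0X^{1/2}$ for a fixed constant $C_0$, and let $J$ be a subinterval of $(M,2M]$. Then there are constants $0<c_1<c_2$ and $C>0$ depending only on $C_0$ such that for any integer $Q$ with $\frac MH\le Q\le\frac M{(HX)^{1/4}}$, the set $\{(m,n)\in\mathbb Z^2:m\in J,\ X<nm\le X+H\}$ can be partitioned as $$\bigcup_{q=1}^Q\ \bigcup_{\substack{c_1\frac X{M^2}q\le a\le c_2\frac X{M^2}q\\ \gcd(a,q)=1}}\ \bigcup_{P\in\mathcal P_{a,q}}P,$$ where for each such coprime pair $(a,q)$, $\mathcal P_{a,q}$ is a family of at most $C\frac{M^3}{XQ^2q}$ arithmetic progressions $P$ contained in the set, each of spacing $(q,-a)$ and length at most $\frac{HQ}M$.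
   Context: An arithmetic progression in $\mathbb Z^2$ of spacing $v$ is a set $\{x_0+jv:0\le j<\ell\}$, with $\ell$ its length. *)

(* Defs.v *)
From Stdlib Require Import Reals ZArith List.

Definition in_AP (x0 v : Z * Z) (l : nat) (p : Z * Z) : Prop :=
  exists j : nat, (j < l)%nat /\
    p = (fst x0 + Z.of_nat j * fst v, snd x0 + Z.of_nat j * snd v)%Z.

Definition in_S (J : R -> Prop) (X H : R) (p : Z * Z) : Prop :=
  J (IZR (fst p)) /\ (X < IZR (fst p * snd p) <= X + H)%R.

Definition is_interval (J : R -> Prop) : Prop :=
  forall x y z : R, J x -> J z -> (x <= y <= z)%R -> J y.

Definition admissible (c1 c2 X M : R) (Q q a : Z) : Prop :=
  (1 <= q <= Q)%Z /\
  (c1 * X / M ^ 2 * IZR q <= IZR a <= c2 * X / M ^ 2 * IZR q)%R /\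
  Z.gcd a q = 1%Z.

(* Main.v *)
Require Import Defs.
From Stdlib Require Import Reals ZArith List Lia Lra Psatz.
From Stdlib Require Import ClassicalEpsilon Classical.
Import ListNotations.
Open Scope R_scope.


Definition seqZ (lo : Z) (n : nat) : list Z := map (fun i => (lo + Z.of_nat i)%Z) (seq 0 n).

Lemma seqZ_In lo n x : In x (seqZ lo n) <-> (lo <= x < lo + Z.of_nat n)%Z.
Proof.
  unfold seqZ; rewrite in_map_iff; split.
  - intros [i [<- Hi]]. apply in_seq in Hi. lia.
  - intros H. exists (Z.to_nat (x - lo)). split; [lia|]. apply in_seq. lia.
Qed.

Lemma seqZ_NoDup lo n : NoDup (seqZ lo n).
Proof.
  unfold seqZ. apply NoDup_map_NoDup_ForallPairs. intros i j _ _ H; lia. apply seq_NoDup.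
Qed.

Lemma seqZ_length lo n : length (seqZ lo n) = n.
Proof. unfold seqZ; rewrite length_map, length_seq; auto. Qed.

Lemma nodup_range_len (l : list Z) lo hi :
  NoDup l -> (forall x, In x l -> (lo <= x <= hi)%Z) -> (Z.of_nat (length l) <= Z.max 0 (hi - lo + 1))%Z.
Proof.
  intros Hn Hr.
  assert (length l <= Z.to_nat (hi - lo + 1))%nat.
  { rewrite <- (seqZ_length lo (Z.to_nat (hi - lo + 1))).
    apply NoDup_incl_length; auto. intros x Hx. apply seqZ_In. specialize (Hr x Hx). lia. }
  lia.
Qed.

Lemma pairwise_len (l : list Z) (D : R) :
  0 <= D -> NoDup l -> (forall x y, In x l -> In y l -> IZR (Z.abs (x - y)) <= D) ->
  INR (length l) <= 2 * D + 1.
Proof.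
  intros HD Hn Hp. destruct l as [|x0 l'].
  - simpl. lra.
  - 
    set (d := (up D - 1)%Z).
    destruct (archimed D) as [H1 H2].
    assert (Hd1 : IZR d <= D) by (unfold d; rewrite minus_IZR; lra).
    assert (Hd2 : D < IZR d + 1) by (unfold d; rewrite minus_IZR; lra).
    pose proof (nodup_range_len (x0 :: l') (x0 - d) (x0 + d) Hn) as Hl.
    assert (Hin : forall x, In x (x0 :: l') -> (x0 - d <= x <= x0 + d)%Z).
    { intros x Hx. specialize (Hp x x0 Hx (or_introl eq_refl)).
      assert (IZR (Z.abs (x - x0)) < IZR (d + 1)) by (rewrite plus_IZR; lra).
      apply lt_IZR in H. lia. }
    specialize (Hl Hin).
    rewrite INR_IZR_INZ.
    apply IZR_le in Hl.
    assert (Z.max 0 (x0 + d - (x0 - d) + 1) = 2 * d + 1)%Z.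
    { assert (0 <= d)%Z. { assert (-1 < IZR d) by lra. apply lt_IZR in H. lia. } lia. }
    rewrite H in Hl. rewrite plus_IZR, mult_IZR in Hl. lra.
Qed.

Definition dec (P : Prop) : bool := if excluded_middle_informative P then true else false.
Lemma dec_true P : dec P = true <-> P.
Proof. unfold dec; destruct (excluded_middle_informative P); split; intros; auto; discriminate. Qed.
Lemma dec_false P : dec P = false <-> ~ P.
Proof. unfold dec; destruct (excluded_middle_informative P); split; intros; auto; try discriminate; tauto. Qed.

Fixpoint sumR (l : list R) : R := match l with [] => 0 | x :: r => x + sumR r end.

Lemma sumR_le_const {A} (f : A -> R) (l : list A) B :
  (forall x, In x l -> f x <= B) -> sumR (map f l) <= INR (length l) * B.
Proof.
  induction l; cbn [map sumR length]; intros H. simpl; lra.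
  rewrite S_INR. assert (f a <= B) by (apply H; simpl; auto).
  assert (sumR (map f l) <= INR (length l) * B) by (apply IHl; intros; apply H; simpl; auto). lra.
Qed.


Lemma sumR_app l1 l2 : sumR (l1 ++ l2) = sumR l1 + sumR l2.
Proof. induction l1; simpl; lra. Qed.

Lemma sumR_plus {A} (f g : A -> R) l : sumR (map (fun x => f x + g x) l) = sumR (map f l) + sumR (map g l).
Proof. induction l; simpl; lra. Qed.

Lemma sumR_ind1 (Ks : list Z) (k0 : Z) :
  NoDup Ks -> In k0 Ks -> sumR (map (fun k => if Z.eqb k0 k then 1 else 0) Ks) = 1.
Proof.
  induction Ks as [|k Ks IH]; simpl; intros Hn Hi. contradiction.
  inversion Hn; subst. destruct Hi as [Heq|Hi]; [subst k|].
  - rewrite Z.eqb_refl. assert (sumR (map (fun k => if Z.eqb k0 k then 1 else 0) Ks) = 0); [|lra].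
    clear IH H2 Hn. induction Ks; simpl; auto. destruct (Z.eqb_spec k0 a). subst. simpl in H1. tauto.
    rewrite IHKs. lra. simpl in H1; tauto.
  - destruct (Z.eqb_spec k0 k). subst; contradiction. rewrite IH; auto. lra.
Qed.

Lemma fiber_count {A} (key : A -> Z) (l : list A) (Ks : list Z) :
  NoDup Ks -> (forall x, In x l -> In (key x) Ks) ->
  INR (length l) = sumR (map (fun k => INR (length (filter (fun x => Z.eqb (key x) k) l))) Ks).
Proof.
  intros Hn. induction l as [|x l IH]; intros Hin; cbn [length filter].
  - clear. induction Ks; cbn [map sumR]; auto. rewrite <- IHKs; simpl; lra.
  - rewrite S_INR. rewrite IH by (intros; apply Hin; simpl; auto).
    rewrite <- (sumR_ind1 Ks (key x) Hn (Hin x (or_introl eq_refl))).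
    rewrite <- sumR_plus. f_equal. apply map_ext. intros k.
    destruct (Z.eqb (key x) k); cbn [length]; try rewrite S_INR; lra.
Qed.

Lemma NoDup_map_inj {A B} (f : A -> B) (l : list A) :
  NoDup l -> (forall x y, In x l -> In y l -> f x = f y -> x = y) -> NoDup (map f l).
Proof.
  induction l as [|x l IH]; simpl; intros Hn Hi. constructor.
  inversion Hn; subst. constructor.
  - intros Hm. apply in_map_iff in Hm. destruct Hm as [y [Hy1 Hy2]].
    assert (y = x) by (apply Hi; auto). subst. contradiction.
  - apply IH; auto.
Qed.

Lemma not_NoDup_map {A B} (f : A -> B) (l : list A) :
  NoDup l -> ~ NoDup (map f l) -> exists x y, In x l /\ In y l /\ x <> y /\ f x = f y.
Proof.
  induction l as [|x l IH]; simpl; intros Hn Hm. elim Hm; constructor.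
  inversion Hn; subst.
  destruct (classic (In (f x) (map f l))) as [Hc|Hc].
  - apply in_map_iff in Hc. destruct Hc as [y [Hy1 Hy2]]. exists x, y. repeat split; auto.
    intro; subst; contradiction.
  - destruct (classic (NoDup (map f l))) as [Hd|Hd].
    + elim Hm. constructor; auto.
    + destruct (IH H2 Hd) as [a [b [? [? [? ?]]]]]. exists a, b; tauto.
Qed.

Lemma range_min (P : Z -> Prop) lo n :
  (exists u, P u /\ (lo <= u < lo + Z.of_nat n)%Z) ->
  exists x, P x /\ (lo <= x < lo + Z.of_nat n)%Z /\ forall u, P u -> (lo <= u < lo + Z.of_nat n)%Z -> (x <= u)%Z.
Proof.
  induction n as [|n IH]; intros [u [Hu Hr]]. lia.
  destruct (classic (exists u, P u /\ (lo <= u < lo + Z.of_nat n)%Z)) as [He|He].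
  - destruct (IH He) as [x [Hx [Hxr Hmin]]]. exists x. split; auto. split; [lia|].
    intros v Hv Hvr. destruct (Z.eq_dec v (lo + Z.of_nat n)). lia. apply Hmin; auto; lia.
  - exists u. split; auto. split; [lia|]. intros v Hv Hvr.
    destruct (Z_lt_le_dec v u); auto; try lia.
    assert (u = lo + Z.of_nat n)%Z. { destruct (Z.eq_dec u (lo + Z.of_nat n)); auto. elim He; exists u; split; auto; lia. }
    elim He. exists v. split; auto. lia.
Qed.

Lemma range_max (P : Z -> Prop) lo n :
  (exists u, P u /\ (lo <= u < lo + Z.of_nat n)%Z) ->
  exists x, P x /\ (lo <= x < lo + Z.of_nat n)%Z /\ forall u, P u -> (lo <= u < lo + Z.of_nat n)%Z -> (u <= x)%Z.
Proof.
  intros H.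
  destruct (range_min (fun v => P (2 * lo + Z.of_nat n - 1 - v)%Z) lo n) as [x [Hx [Hxr Hm]]].
  { destruct H as [u [Hu Hr]]. exists (2 * lo + Z.of_nat n - 1 - u)%Z. split. replace (2 * lo + Z.of_nat n - 1 - (2 * lo + Z.of_nat n - 1 - u))%Z with u by lia; auto. lia. }
  exists (2 * lo + Z.of_nat n - 1 - x)%Z. split; auto. split; [lia|].
  intros u Hu Hr. specialize (Hm (2 * lo + Z.of_nat n - 1 - u)%Z).
  replace (2 * lo + Z.of_nat n - 1 - (2 * lo + Z.of_nat n - 1 - u))%Z with u in Hm by lia.
  specialize (Hm Hu). lia.
Qed.

Lemma my_choice {A B} (R : A -> B -> Prop) : (forall x, exists y, R x y) -> exists f, forall x, R x (f x).
Proof.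
  intros H. exists (fun x => proj1_sig (constructive_indefinite_description _ (H x))).
  intros x. exact (proj2_sig (constructive_indefinite_description _ (H x))).
Qed.

Lemma div_le_r a b d : 0 < d -> a <= b * d -> a / d <= b.
Proof. intros Hd H. unfold Rdiv. apply (Rmult_le_reg_r d); auto. rewrite Rmult_assoc, Rinv_l, Rmult_1_r; lra. Qed.
Lemma div_ge_r a b d : 0 < d -> b * d <= a -> b <= a / d.
Proof. intros Hd H. unfold Rdiv. apply (Rmult_le_reg_r d); auto. rewrite Rmult_assoc, Rinv_l, Rmult_1_r; lra. Qed.
Lemma div_nonneg a d : 0 <= a -> 0 < d -> 0 <= a / d.
Proof. intros. unfold Rdiv. apply Rmult_le_pos; auto. left; apply Rinv_0_lt_compat; auto. Qed.
Lemma div_pos a d : 0 < a -> 0 < d -> 0 < a / d.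
Proof. intros. unfold Rdiv. apply Rmult_lt_0_compat; auto. apply Rinv_0_lt_compat; auto. Qed.
Lemma div_mul_id a d : 0 < d -> a / d * d = a.
Proof. intros. field. lra. Qed.

Lemma length_flat_map_const {A B} (f : A -> list B) (l : list A) c :
  (forall x, length (f x) = c) -> length (flat_map f l) = (c * length l)%nat.
Proof. intros Hf. induction l; simpl. lia. rewrite length_app, Hf, IHl. lia. Qed.


Lemma seqZ_S lo n : seqZ lo (S n) = seqZ lo n ++ [(lo + Z.of_nat n)%Z].
Proof. unfold seqZ. rewrite seq_S, map_app. reflexivity. Qed.

Lemma chain_lemma (P : Z -> Z -> Prop) (cnt : Z -> R) (w S c D : R) (T0 : Z) :
  0 < w -> 0 <= c -> 0 <= S -> 0 <= D ->
  (forall t, ~ (exists u, P t u) -> cnt t = 0) ->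
  (forall t x y, P t x -> P t y -> (forall u, P t u -> (x <= u <= y)%Z) -> cnt t <= (IZR y - IZR x) / w + 2) ->
  (forall t, (exists u, P t u) -> exists x y, P t x /\ P t y /\ forall u, P t u -> (x <= u <= y)%Z) ->
  (forall t' t p x y, P t' p -> P t x -> P t y -> (t' < t)%Z -> (x <= y)%Z -> IZR y - IZR x <= c * (IZR x - IZR p)) ->
  (forall t x y, P t x -> P t y -> (x <= y)%Z -> IZR y - IZR x <= S) ->
  (forall t t' x y, P t x -> P t' y -> IZR x - IZR y <= D) ->
  forall n, sumR (map cnt (seqZ T0 n)) <= 2 * INR n + (S + c * D) / w.
Proof.
  intros Hw Hc HS HD H0 Hcnt Hfin A2 A3 A4 n.
  assert (Inv : (forall t, (T0 <= t < T0 + Z.of_nat n)%Z -> ~ exists u, P t u) /\ sumR (map cnt (seqZ T0 n)) = 0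
     \/ exists f z tz, (exists tf, P tf f) /\ (tz < T0 + Z.of_nat n)%Z /\ P tz z /\
          sumR (map cnt (seqZ T0 n)) <= 2 * INR n + (S + c * (IZR z - IZR f)) / w).
  { induction n as [|n IH].
    - left. split. intros; lia. reflexivity.
    - rewrite seqZ_S, map_app, sumR_app. cbn [map sumR]. rewrite S_INR.
      set (t := (T0 + Z.of_nat n)%Z) in *. pose proof (pos_INR n).
      destruct (classic (exists u, P t u)) as [He|He].
      + destruct (Hfin t He) as [x [y [Hx [Hy Hxy]]]].
        assert (Hxy' : (x <= y)%Z) by (apply Hxy; auto).
        assert (Hc1 := Hcnt t x y Hx Hy Hxy).
        destruct IH as [[_ Hs]|[f [z [tz [Hf [Htz [Hz Hs]]]]]]].
        * right. exists x, y, t. split; [eauto|]. split; [lia|]. split; auto.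
          rewrite Hs. assert (IZR y - IZR x <= S) by (apply (A3 t); auto).
          assert (IZR x <= IZR y) by (apply IZR_le; auto).
          assert (0 <= c * (IZR y - IZR x)) by (apply Rmult_le_pos; lra).
          assert ((IZR y - IZR x) / w <= (S + c * (IZR y - IZR x)) / w).
          { unfold Rdiv. apply Rmult_le_compat_r. left; apply Rinv_0_lt_compat; auto. lra. }
          lra.
        * right. exists f, y, t. split; auto. split; [lia|]. split; auto.
          assert (Hch : IZR y - IZR x <= c * (IZR x - IZR z)) by (apply (A2 tz t z x y); auto; lia).
          assert (IZR x <= IZR y) by (apply IZR_le; auto).
          assert (c * (IZR x - IZR z) <= c * (IZR y - IZR z)) by (apply Rmult_le_compat_l; lra).
          assert (E : (S + c * (IZR z - IZR f)) / w + (IZR y - IZR x) / w <= (S + c * (IZR y - IZR f)) / w).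
          { unfold Rdiv. rewrite <- Rmult_plus_distr_r. apply Rmult_le_compat_r. left; apply Rinv_0_lt_compat; auto.
            nra. }
          lra.
      + rewrite (H0 t He). destruct IH as [[Hn Hs]|[f [z [tz [Hf [Htz [Hz Hs]]]]]]].
        * left. split. intros t' Ht'. destruct (Z.eq_dec t' t). subst; auto. apply Hn; lia. lra.
        * right. exists f, z, tz. split; auto. split; [lia|]. split; auto. lra. }
  assert (0 <= INR n) by apply pos_INR.
  destruct Inv as [[_ Hs]|[f [z [tz [[tf Hf] [Htz [Hz Hs]]]]]]].
  - rewrite Hs. assert (0 <= (S + c * D) / w). { unfold Rdiv. apply Rmult_le_pos. nra. left; apply Rinv_0_lt_compat; auto. } lra.
  - assert (IZR z - IZR f <= D) by (apply (A4 tz tf); auto).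
    assert ((S + c * (IZR z - IZR f)) / w <= (S + c * D) / w).
    { unfold Rdiv. apply Rmult_le_compat_r. left; apply Rinv_0_lt_compat; auto. nra. }
    lra.
Qed.


Lemma Rabs_le_inv x a : Rabs x <= a -> - a <= x <= a.
Proof. unfold Rabs; destruct (Rcase_abs x); intros; lra. Qed.

Definition fl (x : R) : Z := (up x - 1)%Z.
Lemma fl_spec x : IZR (fl x) <= x < IZR (fl x) + 1.
Proof. unfold fl. destruct (archimed x). rewrite minus_IZR. lra. Qed.
Lemma fl_unique x k : IZR k <= x < IZR k + 1 -> fl x = k.
Proof.
  intros H. pose proof (fl_spec x).
  assert (IZR (fl x) < IZR (k + 1)) by (rewrite plus_IZR; lra).
  assert (IZR k < IZR (fl x + 1)) by (rewrite plus_IZR; lra).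
  apply lt_IZR in H1. apply lt_IZR in H2. lia.
Qed.
Lemma fl_le x y : x <= y -> (fl x <= fl y)%Z.
Proof.
  intros H. pose proof (fl_spec x). pose proof (fl_spec y).
  assert (IZR (fl x) < IZR (fl y + 1)) by (rewrite plus_IZR; lra). apply lt_IZR in H2. lia.
Qed.
Lemma fl_ge_int x k : IZR k <= x -> (k <= fl x)%Z.
Proof.
  intros H. pose proof (fl_spec x).
  assert (IZR k < IZR (fl x + 1)) by (rewrite plus_IZR; lra). apply lt_IZR in H1. lia.
Qed.
Lemma fl_lt_int x k : x < IZR k -> (fl x < k)%Z.
Proof.
  intros H. pose proof (fl_spec x). assert (IZR (fl x) < IZR k) by lra. apply lt_IZR; auto.
Qed.

Lemma dirichlet0 (alpha : R) (Q : Z) : (1 <= Q)%Z ->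
  exists q a, (1 <= q <= Q)%Z /\ Rabs (IZR q * alpha - IZR a) < 1 / IZR Q.
Proof.
  intros HQ.
  set (fr := fun j : nat => INR j * alpha - IZR (fl (INR j * alpha))).
  assert (Hfr : forall j, 0 <= fr j < 1) by (intros j; unfold fr; pose proof (fl_spec (INR j * alpha)); lra).
  set (box := fun j : nat => fl (IZR Q * fr j)).
  assert (HQr : 1 <= IZR Q) by (apply IZR_le; auto).
  assert (Hbox : forall j, (0 <= box j < Q)%Z).
  { intros j. unfold box. specialize (Hfr j). split.
    - apply fl_ge_int. simpl. nra.
    - apply fl_lt_int. nra. }
  destruct (classic (NoDup (map box (seq 0 (S (Z.to_nat Q)))))) as [Hnd|Hnd].
  - exfalso. assert (Hl := NoDup_incl_length (l' := seqZ 0 (Z.to_nat Q)) Hnd).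
    rewrite length_map, length_seq, seqZ_length in Hl. assert (S (Z.to_nat Q) <= Z.to_nat Q)%nat; [|lia].
    apply Hl. intros x Hx. apply in_map_iff in Hx. destruct Hx as [j [<- _]]. apply seqZ_In.
    specialize (Hbox j). lia.
  - destruct (not_NoDup_map box _ (seq_NoDup _ 0) Hnd) as [j1 [j2 [H1 [H2 [Hne Heq]]]]].
    assert (key : forall i1 i2 : nat, (i1 < i2)%nat -> box i1 = box i2 -> (i2 <= Z.to_nat Q)%nat ->
      exists q a, (1 <= q <= Q)%Z /\ Rabs (IZR q * alpha - IZR a) < 1 / IZR Q).
    { intros i1 i2 Hlt Hb Hi2.
      exists (Z.of_nat i2 - Z.of_nat i1)%Z, (fl (INR i2 * alpha) - fl (INR i1 * alpha))%Z.
      split; [lia|].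
      unfold box in Hb. pose proof (fl_spec (IZR Q * fr i1)) as F1. pose proof (fl_spec (IZR Q * fr i2)) as F2.
      rewrite Hb in F1.
      assert (E : IZR (Z.of_nat i2 - Z.of_nat i1) * alpha - IZR (fl (INR i2 * alpha) - fl (INR i1 * alpha)) = fr i2 - fr i1).
      { unfold fr. rewrite !minus_IZR, <- !INR_IZR_INZ. ring. }
      rewrite E. assert (Habs : Rabs (IZR Q * fr i2 - IZR Q * fr i1) < 1) by (apply Rabs_def1; lra).
      replace (IZR Q * fr i2 - IZR Q * fr i1) with (IZR Q * (fr i2 - fr i1)) in Habs by ring.
      rewrite Rabs_mult, (Rabs_right (IZR Q)) in Habs by lra.
      apply (Rmult_lt_reg_l (IZR Q)). lra. unfold Rdiv. rewrite Rmult_1_l, Rinv_r; lra. }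
    apply in_seq in H1. apply in_seq in H2.
    destruct (Nat.lt_total j1 j2) as [Hl|[Hl|Hl]]; try contradiction.
    + apply key with j1 j2; auto; lia.
    + apply key with j2 j1; auto; lia.
Qed.

Lemma dirichlet_red (alpha : R) (Q q a : Z) : (1 <= q)%Z -> Rabs (IZR q * alpha - IZR a) <= 1 / IZR Q ->
  exists q' a', (1 <= q' <= q)%Z /\ Z.gcd a' q' = 1%Z /\ Rabs (IZR q' * alpha - IZR a') <= 1 / IZR Q.
Proof.
  intros Hq Ha. set (g := Z.gcd a q).
  assert (Hg : (0 < g)%Z). { pose proof (Z.gcd_nonneg a q). assert (g <> 0)%Z; [|unfold g in *; lia].
    intro H0. apply Z.gcd_eq_0 in H0. lia. }
  destruct (Z.gcd_divide_l a q) as [ka Hka]. destruct (Z.gcd_divide_r a q) as [kq Hkq].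
  fold g in Hka, Hkq.
  exists kq, ka. assert (Hkq1 : (1 <= kq)%Z) by nia.
  split; [nia|]. split.
  - pose proof (Z.gcd_div_gcd a q g) as G. rewrite Hka, Hkq in G at 1 2.
    rewrite !Z.div_mul in G by lia. rewrite <- Hka, <- Hkq in G. apply G; auto; lia.
  - assert (E : IZR q * alpha - IZR a = IZR g * (IZR kq * alpha - IZR ka)).
    { rewrite Hka, Hkq, !mult_IZR. ring. }
    rewrite E, Rabs_mult, Rabs_right in Ha by (apply Rle_ge, IZR_le; lia).
    assert (1 <= IZR g) by (apply IZR_le; lia).
    pose proof (Rabs_pos (IZR kq * alpha - IZR ka)). nra.
Qed.

Lemma dirichlet (alpha K0 : R) (Q : Z) : (1 <= Q)%Z -> 1 <= K0 -> 1 / K0 <= alpha ->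
  exists q a, (1 <= q <= Q)%Z /\ (1 <= a)%Z /\ Z.gcd a q = 1%Z /\ Rabs (IZR q * alpha - IZR a) <= K0 / IZR Q.
Proof.
  intros HQ HK Ha.
  assert (HQr : 1 <= IZR Q) by (apply IZR_le; auto).
  assert (Hal : 0 < alpha). { assert (0 < 1 / K0) by (apply Rdiv_lt_0_compat; lra). lra. }
  destruct (dirichlet0 alpha Q HQ) as [q [a [Hq Hqa]]].
  destruct (dirichlet_red alpha Q q a) as [q' [a' [Hq' [Hg Hqa']]]]; try lia; try lra.
  assert (H1Q : 1 / IZR Q <= 1) by (unfold Rdiv; rewrite Rmult_1_l; rewrite <- Rinv_1; apply Rinv_le_contravar; lra).
  assert (HqQ : 1 / IZR Q <= K0 / IZR Q) by (unfold Rdiv; apply Rmult_le_compat_r; [left; apply Rinv_0_lt_compat; lra|lra]).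
  assert (Hq'r : 1 <= IZR q') by (apply IZR_le; lia).
  assert (Ha0 : (0 <= a')%Z).
  { apply Rabs_le_inv in Hqa'. destruct Hqa'. assert (-1 < IZR a') by nra. apply lt_IZR in H1. lia. }
  destruct (Z.eq_dec a' 0) as [E|E].
  - subst a'. rewrite Z.gcd_0_l in Hg. assert (q' = 1)%Z by lia. subst q'.
    exists 1%Z, 1%Z. split; [lia|]. split; [lia|]. split; [reflexivity|].
    rewrite Rmult_1_l in *. rewrite Rminus_0_r, Rabs_right in Hqa' by lra.
    assert (IZR Q <= K0).
    { assert (alpha * IZR Q <= 1). { apply (Rmult_le_reg_r (/ IZR Q)). apply Rinv_0_lt_compat; lra.
        rewrite Rmult_assoc, Rinv_r, Rmult_1_r by lra. unfold Rdiv in Hqa'. lra. }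
      assert (alpha * K0 >= 1). { unfold Rdiv in Ha. apply Rle_ge. apply (Rmult_le_reg_r (/ K0)). apply Rinv_0_lt_compat; lra.
        rewrite Rmult_assoc, Rinv_r, Rmult_1_r by lra. lra. }
      nra. }
    assert (1 <= K0 / IZR Q). { unfold Rdiv. apply (Rmult_le_reg_r (IZR Q)). lra. rewrite Rmult_assoc, Rinv_l; lra. }
    rewrite Rabs_left1 by lra. lra.
  - exists q', a'. split; [lia|]. split; [lia|]. split; auto. lra.
Qed.


Lemma piece_AP (q a : Z) (L : nat) (Pc : Z * Z -> Prop) (p0 : Z * Z) :
  (1 <= q)%Z -> Z.gcd q a = 1%Z -> Pc p0 ->
  (forall p, Pc p -> (a * fst p + q * snd p = a * fst p0 + q * snd p0)%Z) ->
  (forall p p', Pc p -> Pc p' -> (Z.abs (fst p - fst p') < q * Z.of_nat L)%Z) ->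
  (forall j1 j2 j, Pc (fst p0 + j1 * q, snd p0 - j1 * a)%Z -> Pc (fst p0 + j2 * q, snd p0 - j2 * a)%Z ->
      (j1 <= j <= j2)%Z -> Pc (fst p0 + j * q, snd p0 - j * a)%Z) ->
  exists x0 l, (1 <= l <= L)%nat /\ forall p, Pc p <-> in_AP x0 (q, - a)%Z l p.
Proof.
  intros Hq Hg H0 Hline Hwin Hconv.
  destruct p0 as [m0 n0]. simpl in *.
  set (JS := fun j => Pc (m0 + j * q, n0 - j * a)%Z).
  assert (Hform : forall p, Pc p -> exists j, p = (m0 + j * q, n0 - j * a)%Z).
  { intros [m n] Hp. specialize (Hline _ Hp). simpl in Hline.
    assert (Hd : (q | a * (m - m0))%Z). { exists (n0 - n)%Z. lia. }
    apply Z.gauss in Hd; auto. destruct Hd as [j Hj]. exists j.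
    assert (q * (n0 - n) = q * (j * a))%Z by nia.
    apply Z.mul_reg_l in H; [|lia]. f_equal; lia. }
  assert (HJS0 : JS 0%Z) by (unfold JS; replace (m0 + 0 * q)%Z with m0 by lia; replace (n0 - 0 * a)%Z with n0 by lia; auto).
  assert (Hb : forall j, JS j -> (- Z.of_nat L < j < Z.of_nat L)%Z).
  { intros j Hj. specialize (Hwin _ _ Hj H0). simpl in Hwin.
    replace (m0 + j * q - m0)%Z with (j * q)%Z in Hwin by lia. rewrite Z.abs_mul in Hwin.
    rewrite (Z.abs_eq q) in Hwin by lia. nia. }
  destruct (range_min JS (- Z.of_nat L + 1) (2 * L)) as [jmin [Hjmin [Hr1 Hmin]]].
  { exists 0%Z. split; auto. specialize (Hb 0%Z HJS0). lia. }
  destruct (range_max JS (- Z.of_nat L + 1) (2 * L)) as [jmax [Hjmax [Hr2 Hmax]]].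
  { exists 0%Z. split; auto. specialize (Hb 0%Z HJS0). lia. }
  assert (Hmin' : forall j, JS j -> (jmin <= j)%Z) by (intros j Hj; apply Hmin; auto; specialize (Hb j Hj); lia).
  assert (Hmax' : forall j, JS j -> (j <= jmax)%Z) by (intros j Hj; apply Hmax; auto; specialize (Hb j Hj); lia).
  assert (Hle : (jmin <= jmax)%Z) by (apply Hmax'; auto).
  assert (Hspan : (jmax - jmin < Z.of_nat L)%Z).
  { specialize (Hwin _ _ Hjmax Hjmin). simpl in Hwin.
    replace (m0 + jmax * q - (m0 + jmin * q))%Z with ((jmax - jmin) * q)%Z in Hwin by lia.
    rewrite Z.abs_mul, (Z.abs_eq q), Z.abs_eq in Hwin by lia. nia. }
  exists (m0 + jmin * q, n0 - jmin * a)%Z, (Z.to_nat (jmax - jmin + 1)).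
  split; [lia|]. intros p. split.
  - intros Hp. destruct (Hform p Hp) as [j ->]. assert (JS j) by exact Hp.
    exists (Z.to_nat (j - jmin)). split. specialize (Hmin' j H); specialize (Hmax' j H); lia.
    simpl. specialize (Hmin' j H). rewrite Z2Nat.id by lia. f_equal; lia.
  - intros [i [Hi ->]]. simpl.
    assert (JS (jmin + Z.of_nat i)%Z).
    { apply (Hconv jmin jmax); auto. lia. }
    unfold JS in H. replace (m0 + jmin * q + Z.of_nat i * q)%Z with (m0 + (jmin + Z.of_nat i) * q)%Z by lia.
    replace (n0 - jmin * a + Z.of_nat i * - a)%Z with (n0 - (jmin + Z.of_nat i) * a)%Z by lia. auto.
Qed.


Definition gf (A K x : R) := A * x + K / x.

Lemma gf_diff A K x y : 0 < x -> 0 < y -> gf A K y - gf A K x = (y - x) * (A - K / (x * y)).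
Proof. intros. unfold gf. field. lra. Qed.

Lemma G_lip A K E m m' : 0 < m -> m <= m' -> 0 <= K ->
  Rabs (K / m ^ 2 - A) <= E -> Rabs (K / m' ^ 2 - A) <= E ->
  Rabs (gf A K m' - gf A K m) <= E * (m' - m).
Proof.
  intros Hm Hmm HK H1 H2. rewrite gf_diff by lra.
  apply Rabs_le_inv in H1. apply Rabs_le_inv in H2.
  assert (K / m' ^ 2 <= K / (m * m')).
  { apply div_ge_r. nra. replace (K / m' ^ 2 * (m * m')) with (K * (m / m')) by (field; lra).
    assert (m / m' <= 1) by (apply div_le_r; lra). nra. }
  assert (K / (m * m') <= K / m ^ 2).
  { apply div_ge_r. nra. replace (K / (m * m') * m ^ 2) with (K * (m / m')) by (field; lra).
    assert (m / m' <= 1) by (apply div_le_r; lra). nra. }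
  rewrite Rabs_mult. rewrite (Rabs_right (m' - m)) by lra. rewrite Rmult_comm.
  apply Rmult_le_compat_r. lra. apply Rabs_le. lra.
Qed.

Lemma G_diam A K E M m m' : 0 < M -> M < m -> m <= m' -> m' <= 2 * M -> 0 < K ->
  Rabs (K / m ^ 2 - A) <= E -> Rabs (K / m' ^ 2 - A) <= E ->
  m' - m <= 16 * E * M ^ 3 / K.
Proof.
  intros HM H1 H2 H3 HK E1 E2. apply Rabs_le_inv in E1. apply Rabs_le_inv in E2.
  assert (Hd : K / m ^ 2 - K / m' ^ 2 <= 2 * E) by lra.
  assert (Id : (K / m ^ 2 - K / m' ^ 2) * (m ^ 2 * m' ^ 2) = K * (m' - m) * (m + m')) by (field; lra).
  assert (Hp : m ^ 2 * m' ^ 2 <= 16 * M ^ 4).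
  { assert (m ^ 2 <= 4 * M ^ 2) by nra. assert (m' ^ 2 <= 4 * M ^ 2) by nra.
    replace (16 * M ^ 4) with ((4 * M ^ 2) * (4 * M ^ 2)) by ring. apply Rmult_le_compat; try nra. }
  assert (0 <= K * (m' - m) * (m + m')) by (apply Rmult_le_pos; [apply Rmult_le_pos|]; lra).
  assert (0 <= K / m ^ 2 - K / m' ^ 2).
  { assert (0 < m ^ 2 * m' ^ 2) by (apply Rmult_lt_0_compat; apply pow_lt; lra).
    apply (Rmult_le_reg_r (m ^ 2 * m' ^ 2)); auto. rewrite Id. lra. }
  assert (K * (m' - m) * (2 * M) <= 2 * E * (16 * M ^ 4)).
  { apply Rle_trans with (K * (m' - m) * (m + m')). apply Rmult_le_compat_l; nra.
    rewrite <- Id. apply Rmult_le_compat; try lra. apply Rmult_le_pos; apply pow_le; lra. }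
  apply div_ge_r. auto.
  assert (0 < M) by lra.
  assert (K * (m' - m) * (2 * M) = ((m' - m) * K) * (2 * M)) by ring.
  assert (2 * E * (16 * M ^ 4) = (16 * E * M ^ 3) * (2 * M)) by ring.
  nra.
Qed.

Lemma chain_plus A K e p x y tp t : 0 < p -> p < x -> x <= y -> 0 < K -> 0 <= e ->
  gf A K p <= tp -> tp <= t - 1 -> t - e <= gf A K x -> gf A K y <= t ->
  (1 - e) * (y - x) <= e * (x - p).
Proof.
  intros Hp Hpx Hxy HK He G1 G2 G3 G4.
  pose proof (gf_diff A K p x ltac:(lra) ltac:(lra)) as D1.
  pose proof (gf_diff A K x y ltac:(lra) ltac:(lra)) as D2.
  assert (Hs : K / (x * y) <= K / (p * x)).
  { apply div_ge_r. nra. replace (K / (x * y) * (p * x)) with (K * (p / y)) by (field; lra).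
    assert (p / y <= 1) by (apply div_le_r; lra). nra. }
  set (s1 := A - K / (p * x)) in *. set (s2 := A - K / (x * y)) in *.
  assert (s1 <= s2) by (unfold s1, s2; lra).
  assert (1 - e <= (x - p) * s1) by lra.
  assert ((y - x) * s2 <= e) by lra.
  assert ((1 - e) * (y - x) <= (x - p) * s1 * (y - x)) by nra.
  assert ((x - p) * s1 * (y - x) <= (x - p) * s2 * (y - x)).
  { assert (0 <= (x - p) * (y - x)) by nra. nra. }
  nra.
Qed.

Lemma chain_minus A K e p x y tp t : 0 < x -> x <= y -> y < p -> 0 < K -> 0 <= e ->
  gf A K p <= tp -> tp <= t - 1 -> t - e <= gf A K y -> gf A K x <= t ->
  (1 - e) * (y - x) <= e * (p - y).
Proof.
  intros Hx Hxy Hyp HK He G1 G2 G3 G4.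
  pose proof (gf_diff A K y p ltac:(lra) ltac:(lra)) as D1.
  pose proof (gf_diff A K x y ltac:(lra) ltac:(lra)) as D2.
  assert (Hs : K / (y * p) <= K / (x * y)).
  { apply div_ge_r. nra. replace (K / (y * p) * (x * y)) with (K * (x / p)) by (field; lra).
    assert (x / p <= 1) by (apply div_le_r; lra). nra. }
  set (s1 := K / (y * p) - A) in *. set (s2 := K / (x * y) - A) in *.
  assert (s1 <= s2) by (unfold s1, s2; lra).
  assert (1 - e <= (p - y) * s1) by (unfold s1; nra).
  assert ((y - x) * s2 <= e) by (unfold s2; nra).
  assert ((1 - e) * (y - x) <= (p - y) * s1 * (y - x)) by nra.
  assert ((p - y) * s1 * (y - x) <= (p - y) * s2 * (y - x)).
  { assert (0 <= (p - y) * (y - x)) by nra. nra. }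
  nra.
Qed.

Lemma mono_plus A K x p : 0 <= A -> 0 < x -> x <= p -> K <= A * x ^ 2 -> gf A K x <= gf A K p.
Proof.
  intros HA Hx Hxp HK. pose proof (gf_diff A K x p ltac:(lra) ltac:(lra)).
  assert (K / (x * p) <= A).
  { apply div_le_r. nra. assert (0 <= A * x) by nra. nra. }
  nra.
Qed.

Lemma mono_minus A K y p : 0 <= A -> 0 < p -> p <= y -> A * y ^ 2 <= K -> gf A K y <= gf A K p.
Proof.
  intros HA Hp Hpy HK. pose proof (gf_diff A K p y ltac:(lra) ltac:(lra)).
  assert (A <= K / (p * y)).
  { apply div_ge_r. nra. assert (0 <= A * y) by nra. nra. }
  nra.
Qed.

Lemma tangent_plus A K x y : 0 < x -> x <= y -> K <= A * x ^ 2 ->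
  A * (y - x) ^ 2 <= y * (gf A K y - gf A K x).
Proof.
  intros Hx Hxy HK. rewrite gf_diff by lra.
  assert (K / (x * y) <= A * x / y).
  { apply div_le_r. nra. replace (A * x / y * (x * y)) with (A * x ^ 2) by (field; lra). auto. }
  assert (A - K / (x * y) >= A * (y - x) / y).
  { replace (A * (y - x) / y) with (A - A * x / y) by (field; lra). lra. }
  assert (y * (A - K / (x * y)) >= A * (y - x)).
  { replace (A * (y - x)) with (y * (A * (y - x) / y)) by (field; lra). nra. }
  nra.
Qed.

Lemma tangent_minus A K x y : 0 < x -> x <= y -> A * y ^ 2 <= K ->
  A * (y - x) ^ 2 <= x * (gf A K x - gf A K y).
Proof.
  intros Hx Hxy HK.
  assert (E : gf A K x - gf A K y = (y - x) * (K / (x * y) - A)) by (rewrite <- (Ropp_minus_distr (gf A K y)), gf_diff by lra; ring).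
  rewrite E.
  assert (A * y / x <= K / (x * y)).
  { apply div_ge_r. nra. replace (A * y / x * (x * y)) with (A * y ^ 2) by (field; lra). auto. }
  assert (K / (x * y) - A >= A * (y - x) / x).
  { replace (A * (y - x) / x) with (A * y / x - A) by (field; lra). lra. }
  assert (x * (K / (x * y) - A) >= A * (y - x)).
  { replace (A * (y - x)) with (x * (A * (y - x) / x)) by (field; lra). nra. }
  nra.
Qed.


Ltac posR := repeat (first [apply Rmult_lt_0_compat | apply pow_lt | apply div_pos]); try lra.

Section Main.
Variables (X H M K0 : R) (J : R -> Prop) (Q : Z).
Hypotheses (HX : 1 <= X) (HH : 1 <= H) (HM : 1 <= M) (HK0 : 1 <= K0) (HKX : 4 * M ^ 2 <= K0 * X)
  (HH3 : X <= H ^ 3) (HQ1 : M <= H * IZR Q) (HQ4 : IZR Q ^ 4 * (H * X) <= M ^ 4)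
  (HJ : is_interval J) (HJr : forall x, J x -> M < x <= 2 * M).

Let Qr := IZR Q.

Lemma Q_ge1 : (1 <= Q)%Z.
Proof.
  assert (0 < IZR Q). { apply (Rmult_lt_reg_l H). lra. lra. }
  apply lt_IZR in H0. lia.
Qed.
Lemma Qr_ge1 : 1 <= Qr.
Proof. unfold Qr; apply IZR_le; apply Q_ge1. Qed.

Lemma pow2_le u v : 0 <= u -> 0 <= v -> u ^ 2 <= v ^ 2 -> u <= v.
Proof.
  intros Hu Hv H4. destruct (Rle_lt_dec u v); auto. nra.
Qed.
Lemma pow4_le u v : 0 <= u -> 0 <= v -> u ^ 4 <= v ^ 4 -> u <= v.
Proof.
  intros Hu Hv H4. apply pow2_le; auto. apply pow2_le; try nra.
Qed.

Lemma XQ2 : X * Qr ^ 2 <= H * M ^ 2.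
Proof.
  pose proof Qr_ge1. apply pow2_le. nra. nra.
  replace ((X * Qr ^ 2) ^ 2) with (X * (Qr ^ 4 * X)) by ring.
  replace ((H * M ^ 2) ^ 2) with (H ^ 2 * M ^ 4) by ring.
  assert (Qr ^ 4 * X <= M ^ 4 / H).
  { apply (Rmult_le_reg_l H). lra. field_simplify; [|lra]. unfold Qr; lra. }
  assert (X * (Qr ^ 4 * X) <= X * (M ^ 4 / H)) by (apply Rmult_le_compat_l; lra).
  assert (X * (M ^ 4 / H) <= H ^ 2 * M ^ 4).
  { apply (Rmult_le_reg_l H). lra. field_simplify; [|lra].
    assert (0 <= M ^ 4) by (apply pow_le; lra). nra. }
  lra.
Qed.

Lemma XQ3 : X * Qr ^ 3 <= M ^ 3.
Proof.
  pose proof Qr_ge1.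
  assert (A1 : X * Qr ^ 2 <= H * M ^ 2) by apply XQ2.
  (* (XQ^3)^4 = X^4 Q^12 <= X^4 (M^4/(HX))^3 = X M^12 / H^3 <= M^12 *)
  assert (Hq : Qr ^ 4 <= M ^ 4 / (H * X)).
  { apply (Rmult_le_reg_l (H * X)). nra. field_simplify; [|nra]. unfold Qr; lra. }
  assert (Hq3 : (Qr ^ 4) ^ 3 <= (M ^ 4 / (H * X)) ^ 3) by (apply pow_incr; split; [apply pow_le; lra|auto]).
  assert (E : (X * Qr ^ 3) ^ 4 = X ^ 4 * (Qr ^ 4) ^ 3) by ring.
  assert (X ^ 4 * (M ^ 4 / (H * X)) ^ 3 = X / H ^ 3 * (M ^ 3) ^ 4) by (field; nra).
  assert (X / H ^ 3 <= 1). { apply (Rmult_le_reg_l (H ^ 3)). apply pow_lt; lra. field_simplify; nra. }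
  apply pow4_le. nra. apply pow_le; lra.
  rewrite E. apply Rle_trans with (X ^ 4 * (M ^ 4 / (H * X)) ^ 3).
  apply Rmult_le_compat_l; auto. apply pow_le; lra.
  rewrite H1. assert (0 <= (M ^ 3) ^ 4) by (apply pow_le; apply pow_le; lra). nra.
Qed.


Definition Lz := fl (H * Qr / M).
Definition L := Z.to_nat Lz.

Lemma HQM : 1 <= H * Qr / M.
Proof. apply (Rmult_le_reg_l M). lra. field_simplify; [|lra]. unfold Qr; lra. Qed.

Lemma Lz_ge1 : (1 <= Lz)%Z.
Proof. unfold Lz. apply fl_ge_int. pose proof HQM. simpl; lra. Qed.

Lemma INR_L : INR L = IZR Lz.
Proof. unfold L. rewrite INR_IZR_INZ. rewrite Z2Nat.id; auto. pose proof Lz_ge1; lia. Qed.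

Lemma L_ge1 : (1 <= L)%nat.
Proof. unfold L. pose proof Lz_ge1. lia. Qed.

Lemma L_le : INR L <= H * Qr / M.
Proof. rewrite INR_L. unfold Lz. apply fl_spec. Qed.

Lemma L_ge : H * Qr / (2 * M) <= INR L.
Proof.
  rewrite INR_L. pose proof (fl_spec (H * Qr / M)). fold Lz in H0.
  pose proof Lz_ge1. apply IZR_le in H1.
  assert (H * Qr / (2 * M) = (H * Qr / M) / 2) by (field; lra). lra.
Qed.

Definition W := M ^ 3 / (4 * X * Qr ^ 2).
Lemma W_pos : 0 < W.
Proof. pose proof Qr_ge1. unfold W. apply Rdiv_lt_0_compat. apply pow_lt; lra. nra. Qed.

Definition block (m : Z) : Z := fl ((IZR m - M) / W).
Definition rep (b : Z) : R := M + IZR b * W.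

Lemma block_rep m : M < IZR m -> M <= rep (block m) /\ rep (block m) <= IZR m /\ IZR m < rep (block m) + W.
Proof.
  intros Hm. pose proof W_pos. pose proof (fl_spec ((IZR m - M) / W)). fold (block m) in H1.
  unfold rep.
  assert (0 <= IZR (block m)). { apply IZR_le. apply fl_ge_int. simpl. unfold Rdiv. apply Rmult_le_pos. lra. left; apply Rinv_0_lt_compat; lra. }
  assert (IZR (block m) * W <= IZR m - M).
  { destruct H1. apply (Rmult_le_compat_r W) in H1; [|lra]. unfold Rdiv in H1.
    rewrite Rmult_assoc, Rinv_l, Rmult_1_r in H1 by lra. auto. }
  assert (IZR m - M < IZR (block m) * W + W).
  { destruct H1. apply (Rmult_lt_compat_r W) in H4; [|lra]. unfold Rdiv in H4.
    rewrite Rmult_assoc, Rinv_l, Rmult_1_r in H4 by lra. lra. }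
  nra.
Qed.

Definition Good (b : Z) (qa : Z * Z) : Prop :=
  M <= rep b <= 2 * M ->
  (1 <= fst qa <= Q)%Z /\ (1 <= snd qa)%Z /\ Z.gcd (snd qa) (fst qa) = 1%Z /\
  Rabs (IZR (fst qa) * (X / rep b ^ 2) - IZR (snd qa)) <= K0 / Qr.

Lemma asg_ex : exists f : Z -> Z * Z, forall b, Good b (f b).
Proof.
  apply my_choice. intros b.
  destruct (classic (M <= rep b <= 2 * M)) as [Hr|Hr].
  - destruct (dirichlet (X / rep b ^ 2) K0 Q Q_ge1 HK0) as [q [a [Hq [Ha [Hg Hd]]]]].
    + apply (Rmult_le_reg_l (K0 * rep b ^ 2)). assert (0 < rep b ^ 2) by (apply pow_lt; lra). nra.
      field_simplify; try lra. assert (rep b ^ 2 <= 4 * M ^ 2) by nra. nra.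
    + exists (q, a). intros _. simpl. repeat split; try lia; auto.
  - exists (1%Z, 1%Z). intros H'; contradiction.
Qed.

Definition asg : Z -> Z * Z := proj1_sig (constructive_indefinite_description _ asg_ex).
Lemma asg_good b : Good b (asg b).
Proof. unfold asg. destruct (constructive_indefinite_description _ asg_ex). simpl. auto. Qed.


Lemma slope_var r m : M <= r -> r <= m -> m < r + W -> m <= 2 * M ->
  0 <= X / r ^ 2 - X / m ^ 2 <= 1 / Qr ^ 2.
Proof.
  intros H1 H2 H3 H4. pose proof W_pos. pose proof Qr_ge1.
  assert (E : (X / r ^ 2 - X / m ^ 2) * (r ^ 2 * m ^ 2) = X * (m - r) * (m + r)) by (field; lra).
  assert (EW : 4 * X * W * Qr ^ 2 = M ^ 3) by (unfold W; field; nra).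
  set (u := X / r ^ 2 - X / m ^ 2) in *.
  assert (Hp : 0 < r ^ 2 * m ^ 2) by (apply Rmult_lt_0_compat; apply pow_lt; lra).
  assert (M ^ 4 <= r ^ 2 * m ^ 2).
  { assert (M ^ 2 <= r ^ 2) by (apply pow_incr; lra). assert (M ^ 2 <= m ^ 2) by (apply pow_incr; lra).
    replace (M ^ 4) with (M ^ 2 * M ^ 2) by ring. apply Rmult_le_compat; auto; apply pow_le; lra. }
  assert (0 <= X * (m - r) * (m + r)) by (apply Rmult_le_pos; [apply Rmult_le_pos|]; lra).
  assert (X * (m - r) * (m + r) <= X * W * (4 * M)).
  { apply Rmult_le_compat; try nra. }
  split.
  - nra.
  - apply div_ge_r. apply pow_lt; lra.
    assert (u * Qr ^ 2 * M ^ 4 <= M ^ 4).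
    { assert (u * M ^ 4 <= X * W * (4 * M)).
      { assert (0 <= u) by nra. assert (u * M ^ 4 <= u * (r ^ 2 * m ^ 2)) by (apply Rmult_le_compat_l; auto). nra. }
      assert (X * W * (4 * M) * Qr ^ 2 = M ^ 4) by (rewrite <- (Rmult_1_r (M ^ 4)); replace (M ^ 4 * 1) with (M * M ^ 3) by ring; rewrite <- EW; ring).
      assert (0 <= Qr ^ 2) by (apply pow_le; lra). nra. }
    assert (0 < M ^ 4) by (apply pow_lt; lra). nra.
Qed.

Lemma region m : M < IZR m -> IZR m <= 2 * M ->
  (1 <= fst (asg (block m)) <= Q)%Z /\ (1 <= snd (asg (block m)))%Z /\
  Z.gcd (snd (asg (block m))) (fst (asg (block m))) = 1%Z /\
  Rabs (IZR (fst (asg (block m))) * (X / IZR m ^ 2) - IZR (snd (asg (block m)))) <= (K0 + 1) / Qr.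
Proof.
  intros H1 H2. destruct (block_rep m H1) as [B1 [B2 B3]].
  destruct (asg_good (block m)) as [Hq [Ha [Hg Hd]]]; [lra|].
  set (q := fst (asg (block m))) in *. set (a := snd (asg (block m))) in *. set (r := rep (block m)) in *.
  repeat split; auto; try lia.
  destruct (slope_var r (IZR m)) as [S1 S2]; auto; try lra.
  pose proof Qr_ge1.
  assert (Hqr : 1 <= IZR q <= Qr) by (split; apply IZR_le; lia).
  assert (IZR q * (1 / Qr ^ 2) <= 1 / Qr).
  { replace (IZR q * (1 / Qr ^ 2)) with ((IZR q / Qr) * (1 / Qr)) by (field; lra).
    assert (IZR q / Qr <= 1) by (apply div_le_r; lra).
    assert (0 <= 1 / Qr) by (apply div_nonneg; lra). nra. }
  apply Rabs_le_inv in Hd.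
  assert (E : IZR q * (X / IZR m ^ 2) - IZR a = (IZR q * (X / r ^ 2) - IZR a) - IZR q * (X / r ^ 2 - X / IZR m ^ 2)) by ring.
  rewrite E. apply Rabs_le.
  assert (0 <= IZR q * (X / r ^ 2 - X / IZR m ^ 2) <= 1 / Qr).
  { split. apply Rmult_le_pos; lra. apply Rle_trans with (IZR q * (1 / Qr ^ 2)); auto. apply Rmult_le_compat_l; lra. }
  assert ((K0 + 1) / Qr = K0 / Qr + 1 / Qr) by (field; lra).
  lra.
Qed.


Definition c1 := 1 / (4 * (K0 + 2)).
Definition c2 := 1 + K0 * (K0 + 1).

Lemma adm_region m : M < IZR m -> IZR m <= 2 * M ->
  admissible c1 c2 X M Q (fst (asg (block m))) (snd (asg (block m))).
Proof.
  intros H1 H2. destruct (region m H1 H2) as [Hq [Ha [Hg Hd]]].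
  set (q := fst (asg (block m))) in *. set (a := snd (asg (block m))) in *.
  unfold admissible. split; [auto|]. split; [|auto].
  pose proof Qr_ge1.
  assert (Hqr : 1 <= IZR q) by (apply IZR_le; lia).
  assert (Har : 1 <= IZR a) by (apply IZR_le; lia).
  assert (HE : (K0 + 1) / Qr <= K0 + 1) by (apply div_le_r; nra).
  apply Rabs_le_inv in Hd.
  set (m' := IZR m) in *.
  assert (Hm2 : 0 < m' ^ 2) by (apply pow_lt; lra).
  assert (HM2 : 0 < M ^ 2) by (apply pow_lt; lra).
  assert (Hmm : m' ^ 2 <= 4 * M ^ 2) by nra.
  assert (HMm : M ^ 2 <= m' ^ 2) by nra.
  set (u := X / m' ^ 2) in *. set (v := X / M ^ 2).
  assert (Hu : u * m' ^ 2 = X) by (unfold u; field; lra).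
  assert (Hv : v * M ^ 2 = X) by (unfold v; field; lra).
  assert (Hu0 : 0 < u) by (apply div_pos; lra).
  assert (Huv : v <= 4 * u).
  { assert ((4 * u - v) * M ^ 2 = u * (4 * M ^ 2 - m' ^ 2)) by nra.
    assert (0 <= u * (4 * M ^ 2 - m' ^ 2)) by (apply Rmult_le_pos; lra). nra. }
  assert (Hvu : u <= v).
  { assert ((v - u) * M ^ 2 = u * (m' ^ 2 - M ^ 2)) by nra.
    assert (0 <= u * (m' ^ 2 - M ^ 2)) by (apply Rmult_le_pos; lra). nra. }
  assert (Hv4 : 4 <= K0 * v).
  { assert (K0 * v * M ^ 2 = K0 * X) by (rewrite <- Hv; ring). nra. }
  unfold c1, c2. split.
  - replace (1 / (4 * (K0 + 2)) * X / M ^ 2 * IZR q) with (IZR q * v / (4 * (K0 + 2))) by (unfold v; field; lra).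
    apply div_le_r. lra. nra.
  - replace ((1 + K0 * (K0 + 1)) * X / M ^ 2 * IZR q) with ((1 + K0 * (K0 + 1)) * (IZR q * v)) by (unfold v; field; lra).
    assert (1 <= K0 * (IZR q * v)) by nra.
    assert (K0 + 1 <= K0 * (K0 + 1) * (IZR q * v)) by nra.
    assert (IZR q * u <= IZR q * v) by nra.
    nra.
Qed.


Definition wz (q : Z) : Z := (q * Z.of_nat L)%Z.
Definition idx (q a : Z) (p : Z * Z) : Z * Z * Z * bool :=
  (block (fst p), (a * fst p + q * snd p)%Z, (fst p / wz q)%Z, Z.leb (2 * a * fst p) (a * fst p + q * snd p)).
Definition piece (q a : Z) (i : Z * Z * Z * bool) (p : Z * Z) : Prop :=
  in_S J X H p /\ asg (block (fst p)) = (q, a) /\ idx q a p = i.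

Lemma inS_range p : in_S J X H p -> M < IZR (fst p) <= 2 * M.
Proof. intros [Hj _]. apply HJr; auto. Qed.

Lemma div_same_close (m m' w : Z) : (0 < w)%Z -> (m / w = m' / w)%Z -> (Z.abs (m - m') < w)%Z.
Proof.
  intros Hw He. pose proof (Z.div_mod m w ltac:(lia)). pose proof (Z.div_mod m' w ltac:(lia)).
  pose proof (Z.mod_pos_bound m w Hw). pose proof (Z.mod_pos_bound m' w Hw). rewrite He in H0. lia.
Qed.

Lemma prod_mono_true (q a t m1 mj m2 P1 Pj P2 : Z) : (0 < q)%Z -> (0 <= a)%Z ->
  (q * P1 = t * m1 - a * m1 * m1)%Z -> (q * Pj = t * mj - a * mj * mj)%Z -> (q * P2 = t * m2 - a * m2 * m2)%Z ->
  (m1 <= mj <= m2)%Z -> (2 * a * m2 <= t)%Z -> (P1 <= Pj <= P2)%Z.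
Proof.
  intros Hq Ha E1 Ej E2 Hm Ht.
  assert (q * (Pj - P1) = (mj - m1) * (t - a * (m1 + mj)))%Z by lia.
  assert (q * (P2 - Pj) = (m2 - mj) * (t - a * (mj + m2)))%Z by lia.
  assert (0 <= (mj - m1) * (t - a * (m1 + mj)))%Z by (apply Z.mul_nonneg_nonneg; nia).
  assert (0 <= (m2 - mj) * (t - a * (mj + m2)))%Z by (apply Z.mul_nonneg_nonneg; nia).
  split; nia.
Qed.

Lemma prod_mono_false (q a t m1 mj m2 P1 Pj P2 : Z) : (0 < q)%Z -> (0 <= a)%Z ->
  (q * P1 = t * m1 - a * m1 * m1)%Z -> (q * Pj = t * mj - a * mj * mj)%Z -> (q * P2 = t * m2 - a * m2 * m2)%Z ->
  (m1 <= mj <= m2)%Z -> (t < 2 * a * m1)%Z -> (P2 <= Pj <= P1)%Z.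
Proof.
  intros Hq Ha E1 Ej E2 Hm Ht.
  assert (q * (P1 - Pj) = (mj - m1) * (a * (m1 + mj) - t))%Z by lia.
  assert (q * (Pj - P2) = (m2 - mj) * (a * (mj + m2) - t))%Z by lia.
  assert (0 <= (mj - m1) * (a * (m1 + mj) - t))%Z by (apply Z.mul_nonneg_nonneg; nia).
  assert (0 <= (m2 - mj) * (a * (mj + m2) - t))%Z by (apply Z.mul_nonneg_nonneg; nia).
  split; nia.
Qed.

Lemma quad_inj {A B C D : Type} (a a' : A) (b b' : B) (c c' : C) (d d' : D) :
  (a, b, c, d) = (a', b', c', d') -> a = a' /\ b = b' /\ c = c' /\ d = d'.
Proof. intros E. inversion E. auto. Qed.

Lemma piece_is_AP q a i : (exists p, piece q a i p) ->
  exists x0 l, (1 <= l <= L)%nat /\ forall p, piece q a i p <-> in_AP x0 (q, - a)%Z l p.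
Proof.
  intros [p0 Hp0].
  destruct Hp0 as [HS0 [Ha0 Hi0]].
  destruct (inS_range p0 HS0) as [Hr1 Hr2].
  destruct (region (fst p0) Hr1 Hr2) as [Hq [Ha [Hg _]]]. rewrite Ha0 in Hq, Ha, Hg. simpl in Hq, Ha, Hg.
  assert (Hw : (0 < wz q)%Z) by (unfold wz; pose proof L_ge1; nia).
  apply (piece_AP q a L (piece q a i) p0); auto.
  - lia.
  - rewrite Z.gcd_comm; auto.
  - split; auto.
  - intros p [_ [_ Hi]]. rewrite <- Hi0 in Hi. unfold idx in Hi. inversion Hi. lia.
  - intros p p' [_ [_ Hi]] [_ [_ Hi']]. rewrite <- Hi' in Hi. unfold idx in Hi.
    apply (f_equal (fun x => snd (fst x))) in Hi. simpl in Hi.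
    apply div_same_close in Hi; auto.
  - intros j1 j2 j Hp1 Hp2 Hj.
    destruct p0 as [m0 n0]. cbn [fst snd] in *.
    destruct Hp1 as [HS1 [Ha1 Hi1]]. destruct Hp2 as [HS2 [Ha2 Hi2]].
    set (m1 := (m0 + j1 * q)%Z) in *. set (m2 := (m0 + j2 * q)%Z) in *. set (mj := (m0 + j * q)%Z).
    set (n1 := (n0 - j1 * a)%Z) in *. set (n2 := (n0 - j2 * a)%Z) in *. set (nj := (n0 - j * a)%Z).
    assert (Hm : (m1 <= mj <= m2)%Z) by (unfold m1, m2, mj; nia).
    set (t := (a * m0 + q * n0)%Z).
    assert (L1 : (a * m1 + q * n1 = t)%Z) by (unfold m1, n1, t; ring).
    assert (Lj : (a * mj + q * nj = t)%Z) by (unfold mj, nj, t; ring).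
    assert (L2 : (a * m2 + q * n2 = t)%Z) by (unfold m2, n2, t; ring).
    assert (E1 : (q * (m1 * n1) = t * m1 - a * m1 * m1)%Z) by (rewrite <- L1; ring).
    assert (Ej : (q * (mj * nj) = t * mj - a * mj * mj)%Z) by (rewrite <- Lj; ring).
    assert (E2 : (q * (m2 * n2) = t * m2 - a * m2 * m2)%Z) by (rewrite <- L2; ring).
    unfold idx in Hi0, Hi1, Hi2. cbn [fst snd] in Hi0, Hi1, Hi2.
    rewrite <- Hi0 in Hi1, Hi2. fold t in Hi0, Hi1, Hi2. rewrite L1 in Hi1. rewrite L2 in Hi2.
    apply quad_inj in Hi1. destruct Hi1 as [Hb1 [_ [Hk1 Hs1]]].
    apply quad_inj in Hi2. destruct Hi2 as [Hb2 [_ [Hk2 Hs2]]].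
    assert (Hmr : IZR m1 <= IZR mj <= IZR m2) by (split; apply IZR_le; lia).
    destruct HS1 as [HJ1 HP1]. destruct HS2 as [HJ2 HP2]. simpl in HJ1, HP1, HJ2, HP2.
    assert (HPj : (m1 * n1 <= mj * nj <= m2 * n2)%Z \/ (m2 * n2 <= mj * nj <= m1 * n1)%Z).
    { destruct (Z.leb (2 * a * m0) t) eqn:Es.
      - left. apply (prod_mono_true q a t m1 mj m2); lia.
      - right. apply (prod_mono_false q a t m1 mj m2); lia. }
    assert (Hbj : block mj = block m0).
    { pose proof (fl_le ((IZR m1 - M) / W) ((IZR mj - M) / W)).
      pose proof (fl_le ((IZR mj - M) / W) ((IZR m2 - M) / W)). pose proof W_pos.
      assert ((IZR m1 - M) / W <= (IZR mj - M) / W) by (unfold Rdiv; apply Rmult_le_compat_r; [left; apply Rinv_0_lt_compat|]; lra).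
      assert ((IZR mj - M) / W <= (IZR m2 - M) / W) by (unfold Rdiv; apply Rmult_le_compat_r; [left; apply Rinv_0_lt_compat|]; lra).
      unfold block in *. specialize (H0 H3). specialize (H1 H4). lia. }
    assert (Hkj : (mj / wz q = m0 / wz q)%Z).
    { pose proof (Z.div_le_mono m1 mj (wz q) Hw ltac:(lia)). pose proof (Z.div_le_mono mj m2 (wz q) Hw ltac:(lia)). lia. }
    split; [|split].
    + split.
      * simpl. apply (HJ (IZR m1) (IZR mj) (IZR m2)); auto.
      * simpl. destruct HPj as [[P1 P2]|[P1 P2]]; apply IZR_le in P1; apply IZR_le in P2; lra.
    + simpl. rewrite Hbj. auto.
    + unfold idx. cbn [fst snd]. fold nj. rewrite Lj, Hbj, Hkj, <- Hi0. f_equal.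
      destruct (Z.leb (2 * a * m0) t) eqn:Es.
      * apply Z.leb_le. assert (Z.leb (2 * a * m2) t = true) by (rewrite Hs2; auto). apply Z.leb_le in H0. nia.
      * apply Z.leb_gt. assert (Z.leb (2 * a * m1) t = false) by (rewrite Hs1; auto). apply Z.leb_gt in H0. nia.
Qed.


Definition Nm := fl (2 * M).
Definition Nn := fl (X + H).
Definition box := list_prod (seqZ 1 (Z.to_nat Nm)) (seqZ 1 (Z.to_nat Nn)).

Lemma box_complete p : in_S J X H p -> In p box.
Proof.
  intros HS. destruct p as [m n]. pose proof (inS_range _ HS) as [R1 R2]. simpl in R1, R2.
  destruct HS as [_ [P1 P2]]. simpl in P1, P2.
  unfold box. apply in_prod; apply seqZ_In.
  - assert (1 <= m)%Z by (apply le_IZR; simpl; lra).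
    assert (m <= Nm)%Z by (apply fl_ge_int; lra). lia.
  - assert (Hm1 : (1 <= m)%Z) by (apply le_IZR; simpl; lra).
    assert (0 < m * n)%Z by (apply lt_IZR; simpl; lra).
    assert (Hn : (1 <= n)%Z) by nia.
    assert (n <= m * n)%Z by nia.
    assert (n <= Nn)%Z. { apply fl_ge_int. apply IZR_le in H1. lra. } lia.
Qed.

Definition idx_dec : forall x y : Z * Z * Z * bool, {x = y} + {x <> y}.
Proof. repeat decide equality; apply Z.eq_dec. Defined.

Definition IL (q a : Z) : list (Z * Z * Z * bool) :=
  nodup idx_dec (map (idx q a) (filter (fun p => dec (in_S J X H p /\ asg (block (fst p)) = (q, a))) box)).

Lemma IL_NoDup q a : NoDup (IL q a).
Proof. apply NoDup_nodup. Qed.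

Lemma IL_spec q a i : In i (IL q a) <-> exists p, piece q a i p.
Proof.
  unfold IL. rewrite nodup_In, in_map_iff. split.
  - intros [p [Hi Hp]]. apply filter_In in Hp. destruct Hp as [_ Hd]. apply (proj1 (dec_true _)) in Hd.
    exists p. destruct Hd as [HS Ha]. split; [exact HS|split; [exact Ha|exact Hi]].
  - intros [p [HS [Ha Hi]]]. exists p. split; auto. apply filter_In. split. apply box_complete; auto.
    apply (proj2 (dec_true _)). auto.
Qed.

Definition RPprop (x : Z * Z * (Z * Z * Z * bool)) (y : (Z * Z) * nat) : Prop :=
  (exists p, piece (fst (fst x)) (snd (fst x)) (snd x) p) ->
  (1 <= snd y <= L)%nat /\ forall p, piece (fst (fst x)) (snd (fst x)) (snd x) p <-> in_AP (fst y) (fst (fst x), - snd (fst x))%Z (snd y) p.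

Lemma RP_ex : exists f, forall x, RPprop x (f x).
Proof.
  apply my_choice. intros [[q a] i]. unfold RPprop; simpl.
  destruct (classic (exists p, piece q a i p)) as [He|He].
  - destruct (piece_is_AP q a i He) as [x0 [l Hl]]. exists (x0, l). intros _. exact Hl.
  - exists ((0, 0)%Z, 0%nat). intros H'. contradiction.
Qed.

Definition RPf := proj1_sig (constructive_indefinite_description _ RP_ex).
Lemma RPf_spec x : RPprop x (RPf x).
Proof. unfold RPf. destruct (constructive_indefinite_description _ RP_ex). simpl. auto. Qed.

Definition fam (q a : Z) : list ((Z * Z) * nat) := map (fun i => RPf ((q, a), i)) (IL q a).

Lemma fam_elem q a e : In e (fam q a) -> exists i, In i (IL q a) /\ e = RPf ((q, a), i) /\
  (1 <= snd e <= L)%nat /\ forall p, piece q a i p <-> in_AP (fst e) (q, - a)%Z (snd e) p.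
Proof.
  unfold fam. rewrite in_map_iff. intros [i [<- Hi]]. exists i. split; auto. split; auto.
  apply (RPf_spec ((q, a), i)). apply IL_spec; auto.
Qed.

Lemma AP_first x0 v l : (1 <= l)%nat -> in_AP x0 v l x0.
Proof. intros Hl. exists 0%nat. split. lia. destruct x0; simpl. f_equal; lia. Qed.

Lemma fam_NoDup q a : NoDup (fam q a).
Proof.
  unfold fam. apply NoDup_map_inj. apply IL_NoDup.
  intros i j Hi Hj E.
  pose proof (RPf_spec ((q, a), i) (proj1 (IL_spec q a i) Hi)) as [Hl1 Hp1]. simpl in Hp1.
  pose proof (RPf_spec ((q, a), j) (proj1 (IL_spec q a j) Hj)) as [Hl2 Hp2]. simpl in Hp2.
  rewrite <- E in Hp2.
  set (e := RPf (q, a, i)) in *.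
  assert (Hx : in_AP (fst e) (q, - a)%Z (snd e) (fst e)) by (apply AP_first; lia).
  apply Hp1 in Hx as Hx1. apply Hp2 in Hx as Hx2.
  destruct Hx1 as [_ [_ E1]]. destruct Hx2 as [_ [_ E2]]. congruence.
Qed.


Section Count.
Variables q a : Z.
Hypothesis Hadm : admissible c1 c2 X M Q q a.

Let qr := IZR q.
Let ar := IZR a.
Let Kq := qr * X.
Let eps := qr * H / M.
Let E0 := (K0 + 1) / Qr.
Let D := 16 * E0 * M ^ 3 / Kq.
Let w := IZR (wz q).
Let beta := M ^ 3 / (X * Qr ^ 2 * qr).

Lemma c1_pos : 0 < c1.
Proof. unfold c1. apply div_pos; lra. Qed.

Lemma q_range : (1 <= q <= Q)%Z.
Proof. destruct Hadm; auto. Qed.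

Lemma qr_range : 1 <= qr <= Qr.
Proof. pose proof q_range. unfold qr, Qr; split; apply IZR_le; lia. Qed.

Lemma a_ge1 : (1 <= a)%Z.
Proof.
  destruct Hadm as [Hq [[Ha _] _]]. pose proof c1_pos. pose proof qr_range.
  assert (0 < c1 * X / M ^ 2 * IZR q).
  { apply Rmult_lt_0_compat. apply div_pos. nra. apply pow_lt; lra. fold qr; lra. }
  assert (Hpos : 0 < IZR a) by lra. apply lt_IZR in Hpos. lia.
Qed.

Lemma ar_ge1 : 1 <= ar.
Proof. unfold ar. apply IZR_le. apply a_ge1. Qed.

Lemma a_lower : c1 * X / M ^ 2 * qr <= ar.
Proof. destruct Hadm as [_ [[Ha _] _]]. auto. Qed.

Lemma w_eq : w = qr * INR L.
Proof. unfold w, wz, qr. rewrite mult_IZR, <- INR_IZR_INZ. auto. Qed.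

Lemma w_pos : 0 < w.
Proof. rewrite w_eq. pose proof qr_range. pose proof L_ge1. apply lt_INR in H1. simpl in H1. nra. Qed.

Lemma wz_pos : (0 < wz q)%Z.
Proof. apply lt_IZR. fold w. apply w_pos. Qed.

Lemma w_lo : qr * H * Qr / (2 * M) <= w.
Proof. rewrite w_eq. pose proof L_ge. pose proof qr_range.
  replace (qr * H * Qr / (2 * M)) with (qr * (H * Qr / (2 * M))) by (field; lra).
  apply Rmult_le_compat_l; lra. Qed.

Lemma w_hi : w <= qr * H * Qr / M.
Proof. rewrite w_eq. pose proof L_le. pose proof qr_range.
  replace (qr * H * Qr / M) with (qr * (H * Qr / M)) by (field; lra).
  apply Rmult_le_compat_l; lra. Qed.

Lemma eps_pos : 0 < eps.
Proof. unfold eps. pose proof qr_range. apply div_pos; nra. Qed.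

Lemma beta_ge1 : 1 <= beta.
Proof.
  unfold beta. pose proof qr_range. pose proof Qr_ge1. pose proof XQ3.
  apply div_ge_r. posR.
  assert (X * Qr ^ 2 * qr <= X * Qr ^ 2 * Qr) by (apply Rmult_le_compat_l; nra).
  replace (X * Qr ^ 3) with (X * Qr ^ 2 * Qr) in H2 by ring. lra.
Qed.

Lemma eps_le_beta : eps <= beta.
Proof.
  unfold eps, beta. pose proof qr_range. pose proof Qr_ge1.
  apply div_le_r. lra.
  replace (M ^ 3 / (X * Qr ^ 2 * qr) * M) with (M ^ 4 / (X * Qr ^ 2 * qr)) by (field; repeat split; lra).
  apply div_ge_r. posR.
  assert (qr * H * (X * Qr ^ 2 * qr) = qr ^ 2 * (H * X * Qr ^ 2)) by ring.
  assert (qr ^ 2 <= Qr ^ 2) by (apply pow_incr; lra).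
  assert (0 <= H * X * Qr ^ 2) by (apply Rlt_le; posR).
  assert (qr ^ 2 * (H * X * Qr ^ 2) <= Qr ^ 2 * (H * X * Qr ^ 2)) by (apply Rmult_le_compat_r; auto).
  assert (Qr ^ 2 * (H * X * Qr ^ 2) = Qr ^ 4 * (H * X)) by ring.
  unfold Qr in *. lra.
Qed.

Lemma E0D_eq : E0 * D = 16 * (K0 + 1) ^ 2 * beta.
Proof. unfold D, beta, Kq, E0. pose proof qr_range. pose proof Qr_ge1. field. repeat split; lra. Qed.

Lemma epsDw : eps * D / w <= 32 * (K0 + 1) * beta.
Proof.
  pose proof w_pos. pose proof w_lo. pose proof qr_range. pose proof Qr_ge1.
  apply div_le_r; auto.
  assert (E : eps * D = (32 * (K0 + 1) * beta) * (qr * H * Qr / (2 * M))).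
  { unfold eps, D, beta, Kq, E0. field. repeat split; lra. }
  rewrite E. apply Rmult_le_compat_l; auto.
  pose proof beta_ge1. nra.
Qed.

Lemma E0w : E0 * w <= (K0 + 1) * eps.
Proof.
  pose proof w_hi. pose proof qr_range. pose proof Qr_ge1.
  assert (E : (K0 + 1) * eps = E0 * (qr * H * Qr / M)) by (unfold E0, eps; field; lra).
  rewrite E. apply Rmult_le_compat_l; auto. apply div_nonneg; lra.
Qed.

Definition pt (t m : Z) : Prop := exists n, in_S J X H (m, n) /\ asg (block m) = (q, a) /\ (a * m + q * n = t)%Z.

Lemma pt_range t m : pt t m -> M < IZR m <= 2 * M.
Proof. intros [n [HS _]]. apply (inS_range _ HS). Qed.

Lemma pt_g t m : pt t m -> gf ar Kq (IZR m) < IZR t < gf ar Kq (IZR m) + eps.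
Proof.
  intros Hp. pose proof (pt_range t m Hp) as [R1 R2]. destruct Hp as [n [[_ [P1 P2]] [_ Et]]]. simpl in P1, P2.
  rewrite mult_IZR in P1, P2. rewrite <- Et. rewrite plus_IZR, !mult_IZR. fold qr ar.
  pose proof qr_range.
  unfold gf, Kq, eps.
  assert (E : ar * IZR m + qr * IZR n - (ar * IZR m + qr * X / IZR m) = qr * (IZR m * IZR n - X) / IZR m) by (field; lra).
  assert (0 < qr * (IZR m * IZR n - X) / IZR m) by (apply div_pos; nra).
  assert (qr * (IZR m * IZR n - X) / IZR m < qr * H / M).
  { apply Rle_lt_trans with (qr * H / IZR m).
    - apply div_le_r. lra. replace (qr * H / IZR m * IZR m) with (qr * H) by (field; lra). nra.
    - apply (Rmult_lt_reg_r (M * IZR m)). nra.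
      replace (qr * H / IZR m * (M * IZR m)) with (qr * H * M) by (field; lra).
      replace (qr * H / M * (M * IZR m)) with (qr * H * IZR m) by (field; lra). assert (0 < qr * H) by nra. nra. }
  lra.
Qed.


Lemma pt_qual t m : pt t m -> Rabs (Kq / IZR m ^ 2 - ar) <= E0.
Proof.
  intros Hp. pose proof (pt_range t m Hp) as [R1 R2]. destruct Hp as [n [_ [Ha _]]].
  destruct (region m R1 R2) as [_ [_ [_ Hr]]]. rewrite Ha in Hr. simpl in Hr.
  replace (Kq / IZR m ^ 2) with (IZR q * (X / IZR m ^ 2)). auto.
  unfold Kq, qr. field. lra.
Qed.

Lemma D_nonneg : 0 <= D.
Proof. unfold D, E0, Kq. pose proof qr_range. pose proof Qr_ge1. apply div_nonneg. apply Rmult_le_pos. apply Rmult_le_pos. lra. apply div_nonneg; lra. apply pow_le; lra. nra. Qed.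

Lemma pt_diam t t' m m' : pt t m -> pt t' m' -> IZR m - IZR m' <= D.
Proof.
  intros H1 H2. destruct (Rle_lt_dec (IZR m) (IZR m')). pose proof D_nonneg; lra.
  pose proof (pt_range _ _ H1). pose proof (pt_range _ _ H2). pose proof qr_range.
  apply (G_diam ar Kq E0 M (IZR m') (IZR m)); try lra. unfold Kq; nra.
  apply (pt_qual t'); auto. apply (pt_qual t); auto.
Qed.

Lemma pt_lip t t' m m' : pt t m -> pt t' m' -> Rabs (gf ar Kq (IZR m) - gf ar Kq (IZR m')) <= E0 * Rabs (IZR m - IZR m').
Proof.
  intros H1 H2. pose proof (pt_range _ _ H1). pose proof (pt_range _ _ H2). pose proof qr_range.
  assert (0 <= Kq) by (unfold Kq; nra).
  destruct (Rle_lt_dec (IZR m) (IZR m')).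
  - rewrite Rabs_minus_sym. rewrite (Rabs_minus_sym (IZR m)). rewrite (Rabs_right (IZR m' - IZR m)) by lra.
    apply G_lip; try lra. apply (pt_qual t); auto. apply (pt_qual t'); auto.
  - rewrite (Rabs_right (IZR m - IZR m')) by lra.
    apply G_lip; try lra. apply (pt_qual t'); auto. apply (pt_qual t); auto.
Qed.

Lemma div_lo (m : Z) : w * IZR (m / wz q) <= IZR m.
Proof.
  pose proof wz_pos. pose proof (Z.div_mod m (wz q) ltac:(lia)). pose proof (Z.mod_pos_bound m (wz q) H0).
  unfold w. rewrite <- mult_IZR. apply IZR_le. lia.
Qed.
Lemma div_hi (m : Z) : IZR m < w * IZR (m / wz q) + w.
Proof.
  pose proof wz_pos. pose proof (Z.div_mod m (wz q) ltac:(lia)). pose proof (Z.mod_pos_bound m (wz q) H0).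
  unfold w. rewrite <- mult_IZR, <- plus_IZR. apply IZR_lt. lia.
Qed.
Lemma div_diff (u v : Z) : IZR (v / wz q) - IZR (u / wz q) < (IZR v - IZR u) / w + 1.
Proof.
  pose proof w_pos as Hw. pose proof (div_lo v). pose proof (div_hi u).
  assert (w * (IZR (v / wz q) - IZR (u / wz q)) < IZR v - IZR u + w) by lra.
  assert (Ee : (IZR v - IZR u) / w + 1 = (IZR v - IZR u + w) / w) by (field; lra).
  rewrite Ee. apply (Rmult_lt_reg_l w); auto. replace (w * ((IZR v - IZR u + w) / w)) with (IZR v - IZR u + w) by (field; lra). lra.
Qed.

Definition realized (x : Z * Z) : Prop := exists m, pt (fst x) m /\ (m / wz q)%Z = snd x.

Lemma regimeB (TK : list (Z * Z)) : NoDup TK -> (forall x, In x TK -> realized x) ->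
  INR (length TK) <= (2 * (D / w + 1) + 1) * (2 * (eps + E0 * w) + 1).
Proof.
  intros Hn Hr.
  set (Ks := nodup Z.eq_dec (map snd TK)).
  assert (HKs : NoDup Ks) by apply NoDup_nodup.
  rewrite (fiber_count snd TK Ks HKs).
  2: { intros x Hx. unfold Ks. apply nodup_In. apply in_map; auto. }
  pose proof w_pos. pose proof eps_pos. pose proof D_nonneg.
  assert (HE0 : 0 <= E0) by (unfold E0; pose proof Qr_ge1; apply div_nonneg; lra).
  apply Rle_trans with (INR (length Ks) * (2 * (eps + E0 * w) + 1)).
  - apply sumR_le_const. intros k Hk.
    set (F := filter (fun x => Z.eqb (snd x) k) TK).
    assert (HF : NoDup (map fst F)).
    { apply NoDup_map_inj. apply NoDup_filter; auto.
      intros x y Hx Hy Exy. apply filter_In in Hx. apply filter_In in Hy.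
      destruct Hx as [_ Hx]. destruct Hy as [_ Hy]. apply Z.eqb_eq in Hx. apply Z.eqb_eq in Hy.
      destruct x, y; simpl in *; subst; auto. }
    rewrite <- (length_map fst F). apply pairwise_len; auto.
    + assert (0 <= E0 * w) by (apply Rmult_le_pos; lra). lra.
    + intros t1 t2 Ia Ib. apply in_map_iff in Ia. apply in_map_iff in Ib.
      destruct Ia as [[t1' k1] [E1 Ia]]. destruct Ib as [[t2' k2] [E2 Ib]]. simpl in E1, E2. subst t1' t2'.
      apply filter_In in Ia. apply filter_In in Ib. destruct Ia as [Ia K1]. destruct Ib as [Ib K2].
      apply Z.eqb_eq in K1. apply Z.eqb_eq in K2. simpl in K1, K2. subst k1 k2.
      destruct (Hr _ Ia) as [m1 [P1 W1]]. destruct (Hr _ Ib) as [m2 [P2 W2]]. simpl in *.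
      pose proof (pt_g _ _ P1). pose proof (pt_g _ _ P2).
      pose proof (pt_lip _ _ _ _ P1 P2) as Hlip.
      assert (Hc : (Z.abs (m1 - m2) < wz q)%Z) by (apply div_same_close; [apply wz_pos|congruence]).
      assert (Rabs (IZR m1 - IZR m2) <= w).
      { unfold w. rewrite <- minus_IZR, <- abs_IZR. apply IZR_le. lia. }
      assert (E0 * Rabs (IZR m1 - IZR m2) <= E0 * w) by (apply Rmult_le_compat_l; auto).
      rewrite abs_IZR, minus_IZR. apply Rabs_le_inv in Hlip. apply Rabs_le. lra.
  - apply Rmult_le_compat_r. assert (0 <= E0 * w) by (apply Rmult_le_pos; lra). lra.
    apply pairwise_len; auto.
    + assert (0 <= D / w) by (apply div_nonneg; lra). lra.
    + intros k1 k2 Ia Ib. unfold Ks in Ia, Ib. apply nodup_In in Ia. apply nodup_In in Ib.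
      apply in_map_iff in Ia. apply in_map_iff in Ib.
      destruct Ia as [x1 [E1 Ia]]. destruct Ib as [x2 [E2 Ib]].
      destruct (Hr _ Ia) as [m1 [P1 W1]]. destruct (Hr _ Ib) as [m2 [P2 W2]].
      rewrite <- E1, <- E2, <- W1, <- W2.
      pose proof (pt_diam _ _ _ _ P1 P2). pose proof (pt_diam _ _ _ _ P2 P1).
      pose proof (div_diff m1 m2). pose proof (div_diff m2 m1).
      assert ((IZR m2 - IZR m1) / w <= D / w) by (unfold Rdiv; apply Rmult_le_compat_r; [left; apply Rinv_0_lt_compat|]; lra).
      assert ((IZR m1 - IZR m2) / w <= D / w) by (unfold Rdiv; apply Rmult_le_compat_r; [left; apply Rinv_0_lt_compat|]; lra).
      rewrite abs_IZR, minus_IZR. apply Rabs_le. lra.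
Qed.


Let S := (8 / c1) * beta * w.

Lemma S_nonneg : 0 <= S.
Proof. unfold S. pose proof c1_pos. pose proof beta_ge1. pose proof w_pos.
  apply Rmult_le_pos. apply Rmult_le_pos. apply div_nonneg; lra. lra. lra. Qed.

Lemma Sw_eq : S / w = 32 * (K0 + 2) * beta.
Proof. unfold S, c1. pose proof w_pos. field. split; lra. Qed.

Lemma S_sq : 2 * M * eps / ar <= S ^ 2.
Proof.
  pose proof c1_pos. pose proof beta_ge1. pose proof w_pos. pose proof w_lo. pose proof ar_ge1.
  pose proof a_lower. pose proof qr_range. pose proof Qr_ge1. pose proof XQ2.
  assert (c1le : c1 <= 1). { unfold c1. apply div_le_r; lra. }
  assert (S1 : 2 * M * eps / ar <= 2 * H * M ^ 2 / (c1 * X)).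
  { apply div_le_r. lra.
    replace (2 * H * M ^ 2 / (c1 * X) * ar) with ((2 * H * M ^ 2 / (c1 * X * qr)) * (ar * qr)) by (field; repeat split; lra).
    assert (c1 * X / M ^ 2 * qr * qr <= ar * qr) by (apply Rmult_le_compat_r; lra).
    assert (E1 : 2 * M * eps = (2 * H * M ^ 2 / (c1 * X * qr)) * (c1 * X / M ^ 2 * qr * qr)) by (unfold eps; field; repeat split; lra).
    rewrite E1. apply Rmult_le_compat_l; auto. apply div_nonneg. nra. apply Rmult_lt_0_compat; [apply Rmult_lt_0_compat|]; lra. }
  assert (S2 : 2 * H * M ^ 2 / (c1 * X) <= S ^ 2).
  { unfold S.
    assert (Hw2 : (qr * H * Qr / (2 * M)) ^ 2 <= w ^ 2) by (apply pow_incr; split; [apply div_nonneg; [apply Rlt_le; posR|lra]|auto]).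
    assert (E2 : ((8 / c1) * beta * (qr * H * Qr / (2 * M))) ^ 2 = 16 * H ^ 2 * M ^ 4 / (c1 ^ 2 * X ^ 2 * Qr ^ 2)).
    { unfold beta. field. repeat split; lra. }
    assert (((8 / c1) * beta * (qr * H * Qr / (2 * M))) ^ 2 <= ((8 / c1) * beta * w) ^ 2).
    { rewrite !Rpow_mult_distr. apply Rmult_le_compat_l; auto. apply Rmult_le_pos; apply pow_le.
      apply div_nonneg; lra. lra. }
    assert (2 * H * M ^ 2 / (c1 * X) <= 16 * H ^ 2 * M ^ 4 / (c1 ^ 2 * X ^ 2 * Qr ^ 2)).
    { apply div_le_r. apply Rmult_lt_0_compat; lra.
      replace (16 * H ^ 2 * M ^ 4 / (c1 ^ 2 * X ^ 2 * Qr ^ 2) * (c1 * X)) with ((2 * H * M ^ 2) * (8 * H * M ^ 2 / (c1 * X * Qr ^ 2))) by (field; repeat split; lra).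
      assert (1 <= 8 * H * M ^ 2 / (c1 * X * Qr ^ 2)).
      { assert (0 < X * Qr ^ 2) by posR.
        apply div_ge_r. replace (c1 * X * Qr ^ 2) with (c1 * (X * Qr ^ 2)) by ring. apply Rmult_lt_0_compat; lra.
        assert (0 < c1 * (X * Qr ^ 2)) by (apply Rmult_lt_0_compat; lra).
        assert (c1 * (X * Qr ^ 2) <= X * Qr ^ 2) by nra. assert (0 < H * M ^ 2) by posR. nra. }
      assert (0 < 2 * H * M ^ 2) by posR. nra. }
    lra. }
  lra.
Qed.

Definition realizedP (x : Z * Z) : Prop := exists m, pt (fst x) m /\ (m / wz q)%Z = snd x /\ Kq <= ar * IZR m ^ 2.
Definition realizedM (x : Z * Z) : Prop := exists m, pt (fst x) m /\ (m / wz q)%Z = snd x /\ ar * IZR m ^ 2 <= Kq.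

Lemma Ts_cover (TK : list (Z * Z)) (t0 m0 : Z) : pt t0 m0 -> (forall x, In x TK -> exists m, pt (fst x) m) ->
  forall x, In x TK -> In (fst x) (seqZ (t0 - (fl (eps + E0 * D) + 1)) (Z.to_nat (2 * (fl (eps + E0 * D) + 1) + 1))).
Proof.
  intros P0 Hr x Hx. destruct (Hr x Hx) as [m Pm].
  pose proof (pt_g _ _ P0) as G0. pose proof (pt_g _ _ Pm) as Gm. pose proof (pt_lip _ _ _ _ P0 Pm) as Hl.
  pose proof (pt_diam _ _ _ _ P0 Pm). pose proof (pt_diam _ _ _ _ Pm P0).
  assert (HE0 : 0 <= E0) by (unfold E0; pose proof Qr_ge1; apply div_nonneg; lra).
  assert (Rabs (IZR m0 - IZR m) <= D) by (apply Rabs_le; lra).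
  assert (E0 * Rabs (IZR m0 - IZR m) <= E0 * D) by (apply Rmult_le_compat_l; auto).
  apply Rabs_le_inv in Hl.
  pose proof (fl_spec (eps + E0 * D)). set (N := fl (eps + E0 * D)) in *.
  assert (Z1 : IZR (fst x) - IZR t0 < IZR (N + 1)) by (rewrite plus_IZR; lra).
  assert (Z2 : IZR t0 - IZR (fst x) < IZR (N + 1)) by (rewrite plus_IZR; lra).
  rewrite <- minus_IZR in Z1, Z2. apply lt_IZR in Z1. apply lt_IZR in Z2.
  assert (0 <= N)%Z. { apply fl_ge_int. pose proof eps_pos. pose proof D_nonneg. simpl. nra. }
  apply seqZ_In. lia.
Qed.


Lemma pt_Zrange t u : pt t u -> (1 <= u < 1 + Z.of_nat (Z.to_nat Nm))%Z.
Proof.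
  intros Hp. destruct (pt_range _ _ Hp) as [R1 R2].
  assert (1 < u)%Z by (apply lt_IZR; simpl; lra).
  assert (u <= Nm)%Z by (apply fl_ge_int; lra). lia.
Qed.

Lemma cnt_zero (TK : list (Z * Z)) (P : Z -> Z -> Prop) t :
  (forall x, In x TK -> exists m, P (fst x) m) -> ~ (exists u, P t u) ->
  INR (length (filter (fun x => Z.eqb (fst x) t) TK)) = 0.
Proof.
  intros Hr Hn. destruct (filter (fun x => Z.eqb (fst x) t) TK) as [|y l] eqn:Ef. reflexivity.
  exfalso. assert (In y (filter (fun x => Z.eqb (fst x) t) TK)) by (rewrite Ef; simpl; auto).
  apply filter_In in H0. destruct H0 as [Hy Ht]. apply Z.eqb_eq in Ht.
  destruct (Hr y Hy) as [m Hm]. apply Hn. exists m. rewrite <- Ht. auto.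
Qed.

Lemma fiber_snd_nodup (TK : list (Z * Z)) t : NoDup TK -> NoDup (map snd (filter (fun x => Z.eqb (fst x) t) TK)).
Proof.
  intros Hn. apply NoDup_map_inj. apply NoDup_filter; auto.
  intros x y Hx Hy Exy. apply filter_In in Hx. apply filter_In in Hy.
  destruct Hx as [_ Hx]. destruct Hy as [_ Hy]. apply Z.eqb_eq in Hx. apply Z.eqb_eq in Hy.
  destruct x, y; simpl in *; subst; auto.
Qed.

Lemma cnt_window (l : list Z) (k1 k2 : Z) (x y : Z) :
  NoDup l -> (forall k, In k l -> (k1 <= k <= k2)%Z) -> (k1 <= k2)%Z ->
  IZR k2 - IZR k1 < (IZR y - IZR x) / w + 1 -> INR (length l) <= (IZR y - IZR x) / w + 2.
Proof.
  intros Hn Hk Hk12 Hd. pose proof (nodup_range_len l k1 k2 Hn Hk).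
  rewrite INR_IZR_INZ. apply IZR_le in H0.
  rewrite Z.max_r in H0 by lia. rewrite plus_IZR, minus_IZR in H0. lra.
Qed.

Lemma regimeA_plus (TK : list (Z * Z)) : eps < 1 / 2 -> NoDup TK -> (forall x, In x TK -> realizedP x) ->
  INR (length TK) <= 2 * (2 * (eps + E0 * D) + 3) + (S + (eps / (1 - eps)) * D) / w.
Proof.
  intros He Hn Hr.
  pose proof w_pos. pose proof eps_pos. pose proof D_nonneg. pose proof S_nonneg.
  assert (HE0 : 0 <= E0) by (unfold E0; pose proof Qr_ge1; apply div_nonneg; lra).
  assert (Hc : 0 <= eps / (1 - eps)) by (apply div_nonneg; lra).
  assert (Hrhs : 0 <= (S + eps / (1 - eps) * D) / w) by (apply div_nonneg; [assert (0 <= eps / (1 - eps) * D) by (apply Rmult_le_pos; lra); lra|lra]).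
  destruct TK as [|x0 TK'] eqn:ETK.
  { simpl. assert (0 <= E0 * D) by (apply Rmult_le_pos; lra). lra. }
  rewrite <- ETK in *.
  assert (Hx0 : In x0 TK) by (rewrite ETK; simpl; auto).
  destruct (Hr x0 Hx0) as [m0 [P0 _]].
  assert (Hpt : forall x, In x TK -> exists m, pt (fst x) m) by (intros x Hx; destruct (Hr x Hx) as [m [Pm _]]; eauto).
  set (N := (fl (eps + E0 * D) + 1)%Z).
  assert (HN : (1 <= N)%Z). { unfold N. assert (0 <= fl (eps + E0 * D))%Z; [|lia]. apply fl_ge_int. simpl. assert (0 <= E0 * D) by (apply Rmult_le_pos; lra). lra. }
  assert (HNr : IZR N <= eps + E0 * D + 1). { unfold N. rewrite plus_IZR. pose proof (fl_spec (eps + E0 * D)). lra. }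
  rewrite (fiber_count fst TK (seqZ (fst x0 - N) (Z.to_nat (2 * N + 1))) (seqZ_NoDup _ _)).
  2: { apply (Ts_cover TK (fst x0) m0); auto. }
  set (P := fun t u => pt t u /\ Kq <= ar * IZR u ^ 2).
  eapply Rle_trans.
  apply (chain_lemma P (fun k => INR (length (filter (fun x => Z.eqb (fst x) k) TK))) w S (eps / (1 - eps)) D); auto.
  - intros t Hnt. apply (cnt_zero TK P); auto. intros x Hx. destruct (Hr x Hx) as [m [Pm [_ Sm]]]. exists m. split; auto.
  - intros t x y Px Py Hxy.
    rewrite <- (length_map snd).
    assert (Hxy' : (x <= y)%Z) by (apply Hxy; auto).
    apply (cnt_window _ (x / wz q) (y / wz q)).
    + apply fiber_snd_nodup; auto.
    + intros k Hk. apply in_map_iff in Hk. destruct Hk as [z [Ez Hz]]. apply filter_In in Hz.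
      destruct Hz as [Hz Ht]. apply Z.eqb_eq in Ht. destruct (Hr z Hz) as [m [Pm [Wm Sm]]].
      assert (HPm : P t m) by (split; auto; rewrite <- Ht; auto).
      destruct (Hxy m HPm). rewrite <- Ez, <- Wm. pose proof wz_pos.
      split; apply Z.div_le_mono; lia.
    + apply Z.div_le_mono; auto. apply wz_pos.
    + apply div_diff.
  - intros t [u Pu]. destruct (range_min (P t) 1 (Z.to_nat Nm)) as [x [Px [_ Hmin]]].
    { exists u. split; auto. apply (pt_Zrange t). apply Pu. }
    destruct (range_max (P t) 1 (Z.to_nat Nm)) as [y [Py [_ Hmax]]].
    { exists u. split; auto. apply (pt_Zrange t). apply Pu. }
    exists x, y. split; auto. split; auto. intros v Pv. pose proof (pt_Zrange t v (proj1 Pv)).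
    split; [apply Hmin|apply Hmax]; auto.
  - intros t' t p x y [Pp Sp] [Px Sx] [Py Sy] Htt Hxy.
    pose proof (pt_g _ _ Pp) as Gp. pose proof (pt_g _ _ Px) as Gx. pose proof (pt_g _ _ Py) as Gy.
    pose proof (pt_range _ _ Pp) as Rp. pose proof (pt_range _ _ Px) as Rx. pose proof (pt_range _ _ Py) as Ry.
    assert (Htt' : IZR t' <= IZR t - 1) by (rewrite <- minus_IZR; apply IZR_le; lia).
    assert (Hxy' : IZR x <= IZR y) by (apply IZR_le; auto).
    pose proof ar_ge1.
    assert (Hpx : IZR p < IZR x).
    { destruct (Rlt_le_dec (IZR p) (IZR x)); auto.
      pose proof (mono_plus ar Kq (IZR x) (IZR p) ltac:(lra) ltac:(lra) r Sx). lra. }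
    pose proof (chain_plus ar Kq eps (IZR p) (IZR x) (IZR y) (IZR t') (IZR t)) as Ch.
    assert (0 < Kq) by (unfold Kq; pose proof qr_range; nra).
    assert (Hch : (1 - eps) * (IZR y - IZR x) <= eps * (IZR x - IZR p)) by (apply Ch; lra).
    replace (eps / (1 - eps) * (IZR x - IZR p)) with (eps * (IZR x - IZR p) / (1 - eps)) by (field; lra).
    apply div_ge_r; [lra|]. lra.
  - intros t x y [Px Sx] [Py Sy] Hxy.
    pose proof (pt_g _ _ Px) as Gx. pose proof (pt_g _ _ Py) as Gy.
    pose proof (pt_range _ _ Px) as Rx. pose proof (pt_range _ _ Py) as Ry.
    assert (Hxy' : IZR x <= IZR y) by (apply IZR_le; auto).
    pose proof ar_ge1.
    pose proof (tangent_plus ar Kq (IZR x) (IZR y) ltac:(lra) Hxy' Sx) as Tg.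
    assert (ar * (IZR y - IZR x) ^ 2 <= 2 * M * eps).
    { apply Rle_trans with (IZR y * (gf ar Kq (IZR y) - gf ar Kq (IZR x))); auto.
      assert (0 <= ar * (IZR y - IZR x) ^ 2) by (apply Rmult_le_pos; [lra|apply pow2_ge_0]).
      assert (0 <= gf ar Kq (IZR y) - gf ar Kq (IZR x)) by nra.
      apply Rmult_le_compat; lra. }
    assert ((IZR y - IZR x) ^ 2 <= 2 * M * eps / ar) by (apply div_ge_r; lra).
    pose proof S_sq. apply pow2_le; lra.
  - intros t t' x y Px Py. apply (pt_diam t t'); [apply Px|apply Py].
  - rewrite INR_IZR_INZ, Z2Nat.id by lia. rewrite plus_IZR, mult_IZR. lra.
Qed.


Lemma regimeA_minus (TK : list (Z * Z)) : eps < 1 / 2 -> NoDup TK -> (forall x, In x TK -> realizedM x) ->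
  INR (length TK) <= 2 * (2 * (eps + E0 * D) + 3) + (S + (eps / (1 - eps)) * D) / w.
Proof.
  intros He Hn Hr.
  pose proof w_pos. pose proof eps_pos. pose proof D_nonneg. pose proof S_nonneg.
  assert (HE0 : 0 <= E0) by (unfold E0; pose proof Qr_ge1; apply div_nonneg; lra).
  assert (Hc : 0 <= eps / (1 - eps)) by (apply div_nonneg; lra).
  assert (Hrhs : 0 <= (S + eps / (1 - eps) * D) / w) by (apply div_nonneg; [assert (0 <= eps / (1 - eps) * D) by (apply Rmult_le_pos; lra); lra|lra]).
  destruct TK as [|x0 TK'] eqn:ETK.
  { simpl. assert (0 <= E0 * D) by (apply Rmult_le_pos; lra). lra. }
  rewrite <- ETK in *.
  assert (Hx0 : In x0 TK) by (rewrite ETK; simpl; auto).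
  destruct (Hr x0 Hx0) as [m0 [P0 _]].
  assert (Hpt : forall x, In x TK -> exists m, pt (fst x) m) by (intros x Hx; destruct (Hr x Hx) as [m [Pm _]]; eauto).
  set (N := (fl (eps + E0 * D) + 1)%Z).
  assert (HN : (1 <= N)%Z). { unfold N. assert (0 <= fl (eps + E0 * D))%Z; [|lia]. apply fl_ge_int. simpl. assert (0 <= E0 * D) by (apply Rmult_le_pos; lra). lra. }
  assert (HNr : IZR N <= eps + E0 * D + 1). { unfold N. rewrite plus_IZR. pose proof (fl_spec (eps + E0 * D)). lra. }
  rewrite (fiber_count fst TK (seqZ (fst x0 - N) (Z.to_nat (2 * N + 1))) (seqZ_NoDup _ _)).
  2: { apply (Ts_cover TK (fst x0) m0); auto. }
  set (P := fun t u => pt t (- u) /\ ar * IZR (- u) ^ 2 <= Kq).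
  eapply Rle_trans.
  apply (chain_lemma P (fun k => INR (length (filter (fun x => Z.eqb (fst x) k) TK))) w S (eps / (1 - eps)) D); auto.
  - intros t Hnt. apply (cnt_zero TK P); auto. intros x Hx. destruct (Hr x Hx) as [m [Pm [_ Sm]]].
    exists (- m)%Z. unfold P. rewrite Z.opp_involutive. split; auto.
  - intros t x y Px Py Hxy.
    rewrite <- (length_map snd).
    assert (Hxy' : (x <= y)%Z) by (apply Hxy; auto).
    apply (cnt_window _ ((- y) / wz q) ((- x) / wz q)).
    + apply fiber_snd_nodup; auto.
    + intros k Hk. apply in_map_iff in Hk. destruct Hk as [z [Ez Hz]]. apply filter_In in Hz.
      destruct Hz as [Hz Ht]. apply Z.eqb_eq in Ht. destruct (Hr z Hz) as [m [Pm [Wm Sm]]].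
      assert (HPm : P t (- m)%Z) by (unfold P; rewrite Z.opp_involutive; split; auto; rewrite <- Ht; auto).
      destruct (Hxy _ HPm). rewrite <- Ez, <- Wm. pose proof wz_pos.
      split; apply Z.div_le_mono; lia.
    + apply Z.div_le_mono; [apply wz_pos|lia].
    + pose proof (div_diff (- y) (- x)). rewrite !opp_IZR in H4.
      replace (- IZR x - - IZR y) with (IZR y - IZR x) in H4 by ring. auto.
  - intros t [u Pu]. destruct (range_min (P t) (- Nm) (Z.to_nat Nm)) as [x [Px [_ Hmin]]].
    { exists u. split; auto. pose proof (pt_Zrange t _ (proj1 Pu)). lia. }
    destruct (range_max (P t) (- Nm) (Z.to_nat Nm)) as [y [Py [_ Hmax]]].
    { exists u. split; auto. pose proof (pt_Zrange t _ (proj1 Pu)). lia. }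
    exists x, y. split; auto. split; auto. intros v Pv. pose proof (pt_Zrange t _ (proj1 Pv)).
    split; [apply Hmin|apply Hmax]; auto; lia.
  - intros t' t p x y [Pp Sp] [Px Sx] [Py Sy] Htt Hxy.
    pose proof (pt_g _ _ Pp) as Gp. pose proof (pt_g _ _ Px) as Gx. pose proof (pt_g _ _ Py) as Gy.
    pose proof (pt_range _ _ Pp) as Rp. pose proof (pt_range _ _ Px) as Rx. pose proof (pt_range _ _ Py) as Ry.
    rewrite opp_IZR in Gp, Gx, Gy, Rp, Rx, Ry, Sp, Sx, Sy.
    assert (Htt' : IZR t' <= IZR t - 1) by (rewrite <- minus_IZR; apply IZR_le; lia).
    assert (Hxy' : IZR x <= IZR y) by (apply IZR_le; auto).
    pose proof ar_ge1.
    assert (Hpx : - IZR x < - IZR p).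
    { destruct (Rlt_le_dec (- IZR x) (- IZR p)); auto.
      pose proof (mono_minus ar Kq (- IZR x) (- IZR p) ltac:(lra) ltac:(lra) r Sx). lra. }
    assert (0 < Kq) by (unfold Kq; pose proof qr_range; nra).
    pose proof (chain_minus ar Kq eps (- IZR p) (- IZR y) (- IZR x) (IZR t') (IZR t)) as Ch.
    assert (Hch : (1 - eps) * (- IZR x - - IZR y) <= eps * (- IZR p - - IZR x)) by (apply Ch; lra).
    replace (eps / (1 - eps) * (IZR x - IZR p)) with (eps * (IZR x - IZR p) / (1 - eps)) by (field; lra).
    apply div_ge_r; [lra|]. lra.
  - intros t x y [Px Sx] [Py Sy] Hxy.
    pose proof (pt_g _ _ Px) as Gx. pose proof (pt_g _ _ Py) as Gy.
    pose proof (pt_range _ _ Px) as Rx. pose proof (pt_range _ _ Py) as Ry.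
    rewrite opp_IZR in Gx, Gy, Rx, Ry, Sx, Sy.
    assert (Hxy' : IZR x <= IZR y) by (apply IZR_le; auto).
    pose proof ar_ge1.
    pose proof (tangent_minus ar Kq (- IZR y) (- IZR x) ltac:(lra) ltac:(lra) Sx) as Tg.
    replace (- IZR x - - IZR y) with (IZR y - IZR x) in Tg by ring.
    assert (ar * (IZR y - IZR x) ^ 2 <= 2 * M * eps).
    { apply Rle_trans with (- IZR y * (gf ar Kq (- IZR y) - gf ar Kq (- IZR x))); auto.
      assert (0 <= ar * (IZR y - IZR x) ^ 2) by (apply Rmult_le_pos; [lra|apply pow2_ge_0]).
      assert (0 <= gf ar Kq (- IZR y) - gf ar Kq (- IZR x)) by nra.
      apply Rmult_le_compat; lra. }
    assert ((IZR y - IZR x) ^ 2 <= 2 * M * eps / ar) by (apply div_ge_r; lra).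
    pose proof S_sq. apply pow2_le; lra.
  - intros t t' x y Px Py. pose proof (pt_diam t' t (- y) (- x) (proj1 Py) (proj1 Px)).
    rewrite !opp_IZR in H4. lra.
  - rewrite INR_IZR_INZ, Z2Nat.id by lia. rewrite plus_IZR, mult_IZR. lra.
Qed.


Lemma boundA : eps < 1 / 2 -> 2 * (2 * (eps + E0 * D) + 3) + (S + (eps / (1 - eps)) * D) / w <= 200 * (K0 + 2) ^ 2 * beta.
Proof.
  intros He. pose proof w_pos as Hw. pose proof eps_pos as Hep. pose proof D_nonneg as HD. pose proof beta_ge1 as Hb.
  pose proof eps_le_beta as Heb. pose proof E0D_eq as HE0D. pose proof Sw_eq as HSw. pose proof epsDw as HeD.
  assert (Hdw : 0 <= D / w) by (apply div_nonneg; lra).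
  assert (Hc : eps / (1 - eps) <= 2 * eps) by (apply div_le_r; nra).
  assert (Hc0 : 0 <= eps / (1 - eps)) by (apply div_nonneg; lra).
  assert (E1 : (S + (eps / (1 - eps)) * D) / w = S / w + (eps / (1 - eps)) * (D / w)) by (field; lra).
  assert (E2 : eps * D / w = eps * (D / w)) by (field; lra).
  rewrite E1. rewrite E2 in HeD.
  assert ((eps / (1 - eps)) * (D / w) <= 2 * eps * (D / w)) by (apply Rmult_le_compat_r; auto).
  assert (Hpoly : 10 + 64 * (K0 + 1) ^ 2 + 32 * (K0 + 2) + 64 * (K0 + 1) <= 200 * (K0 + 2) ^ 2) by nra.
  assert (Hpb : (10 + 64 * (K0 + 1) ^ 2 + 32 * (K0 + 2) + 64 * (K0 + 1)) * beta <= 200 * (K0 + 2) ^ 2 * beta)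
    by (apply Rmult_le_compat_r; lra).
  nra.
Qed.

Lemma boundB : 1 / 2 <= eps -> (2 * (D / w + 1) + 1) * (2 * (eps + E0 * w) + 1) <= 200 * (K0 + 2) ^ 2 * beta.
Proof.
  intros He. pose proof w_pos as Hw. pose proof eps_pos as Hep. pose proof D_nonneg as HD. pose proof beta_ge1 as Hb.
  pose proof eps_le_beta as Heb. pose proof epsDw as HeD. pose proof E0w as HEw.
  assert (Hdw : 0 <= D / w) by (apply div_nonneg; lra).
  assert (E2 : eps * D / w = eps * (D / w)) by (field; lra).
  rewrite E2 in HeD.
  assert (B1 : 2 * (eps + E0 * w) + 1 <= (2 * K0 + 6) * eps) by nra.
  assert (B1' : 0 <= 2 * (eps + E0 * w) + 1).
  { assert (0 <= E0 * w). { apply Rmult_le_pos; [unfold E0; pose proof Qr_ge1; apply div_nonneg|]; lra. } lra. }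
  apply Rle_trans with ((2 * (D / w) + 3) * ((2 * K0 + 6) * eps)).
  { replace (2 * (D / w + 1) + 1) with (2 * (D / w) + 3) by ring. apply Rmult_le_compat_l; lra. }
  replace ((2 * (D / w) + 3) * ((2 * K0 + 6) * eps)) with ((2 * K0 + 6) * (2 * (eps * (D / w)) + 3 * eps)) by ring.
  assert (2 * (eps * (D / w)) + 3 * eps <= (64 * (K0 + 1) + 3) * beta) by nra.
  assert ((2 * K0 + 6) * (2 * (eps * (D / w)) + 3 * eps) <= (2 * K0 + 6) * ((64 * (K0 + 1) + 3) * beta)) by (apply Rmult_le_compat_l; lra).
  assert (Hpoly : (2 * K0 + 6) * (64 * (K0 + 1) + 3) <= 200 * (K0 + 2) ^ 2) by nra.
  assert (((2 * K0 + 6) * (64 * (K0 + 1) + 3)) * beta <= 200 * (K0 + 2) ^ 2 * beta) by (apply Rmult_le_compat_r; lra).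
  nra.
Qed.


Lemma w_le_4W : w <= 4 * W.
Proof.
  pose proof w_hi. pose proof qr_range. pose proof Qr_ge1.
  apply Rle_trans with (Qr ^ 2 * H / M).
  { apply Rle_trans with (qr * H * Qr / M); auto. apply div_le_r. lra.
    replace (Qr ^ 2 * H / M * M) with (Qr * (H * Qr)) by (field; lra).
    replace (qr * H * Qr) with (qr * (H * Qr)) by ring. apply Rmult_le_compat_r; nra. }
  unfold W. apply div_le_r. lra.
  replace (4 * (M ^ 3 / (4 * X * Qr ^ 2)) * M) with (M ^ 4 / (X * Qr ^ 2)) by (field; repeat split; lra).
  apply div_ge_r. posR.
  replace (Qr ^ 2 * H * (X * Qr ^ 2)) with (Qr ^ 4 * (H * X)) by ring. unfold Qr; lra.
Qed.

Definition b0 (k : Z) : Z := fl ((IZR (k * wz q) - M) / W).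

Lemma block_window m : (b0 (m / wz q) <= block m <= b0 (m / wz q) + 4)%Z.
Proof.
  pose proof (div_lo m). pose proof (div_hi m). pose proof W_pos. pose proof w_le_4W.
  unfold b0, block. rewrite mult_IZR. fold w.
  set (k := IZR (m / wz q)) in *.
  split.
  - apply fl_le. unfold Rdiv. apply Rmult_le_compat_r. left; apply Rinv_0_lt_compat; lra. lra.
  - pose proof (fl_spec ((k * w - M) / W)).
    assert (Hlt : (IZR m - M) / W < IZR (fl ((k * w - M) / W) + 5)).
    { rewrite plus_IZR. apply Rlt_le_trans with ((k * w - M) / W + 4); [|lra].
      apply (Rmult_lt_reg_r W); auto.
      replace ((IZR m - M) / W * W) with (IZR m - M) by (field; lra).
      replace (((k * w - M) / W + 4) * W) with (k * w - M + 4 * W) by (field; lra). lra. }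
    apply fl_lt_int in Hlt. lia.
Qed.

Definition tk (i : Z * Z * Z * bool) : Z * Z := (snd (fst (fst i)), snd (fst i)).
Definition pair_dec : forall x y : Z * Z, {x = y} + {x <> y}.
Proof. repeat decide equality; apply Z.eq_dec. Defined.

Definition TKl := nodup pair_dec (map tk (IL q a)).

Lemma TK_realized x : In x TKl -> realized x.
Proof.
  unfold TKl. rewrite nodup_In, in_map_iff. intros [i [<- Hi]]. apply IL_spec in Hi.
  destruct Hi as [[m n] [HS [Ha Hi]]]. unfold tk. rewrite <- Hi. unfold idx. simpl.
  exists m. split; auto. exists n. split; auto.
Qed.

Lemma IL_TK : INR (length (IL q a)) <= 10 * INR (length TKl).
Proof.
  set (ext := fun x : Z * Z => flat_map (fun b => [(b, fst x, snd x, true); (b, fst x, snd x, false)]) (seqZ (b0 (snd x)) 5)).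
  assert (Hl : length (flat_map ext TKl) = (10 * length TKl)%nat).
  { apply length_flat_map_const. intros x. unfold ext. rewrite (length_flat_map_const _ _ 2%nat). rewrite seqZ_length. lia.
    intros; reflexivity. }
  assert (length (IL q a) <= length (flat_map ext TKl))%nat.
  { apply NoDup_incl_length. apply IL_NoDup. intros i Hi.
    apply in_flat_map. exists (tk i). split.
    - unfold TKl. apply nodup_In. apply in_map; auto.
    - apply IL_spec in Hi. destruct Hi as [[m n] [HS [Ha Hi]]].
      unfold ext. apply in_flat_map. exists (block m). split.
      + apply seqZ_In. rewrite <- Hi. unfold tk, idx. simpl. pose proof (block_window m). lia.
      + rewrite <- Hi. unfold tk, idx. simpl. destruct (Z.leb _ _); simpl; auto. }
  rewrite Hl in H0. apply le_INR in H0. rewrite mult_INR in H0. simpl in H0. lra.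
Qed.

Lemma count_total : INR (length (IL q a)) <= 4000 * (K0 + 2) ^ 2 * beta.
Proof.
  pose proof IL_TK.
  set (TKp := filter (fun x => dec (realizedP x)) TKl).
  set (TKm := filter (fun x => negb (dec (realizedP x))) TKl).
  assert (Hs : length TKl = (length TKp + length TKm)%nat) by (unfold TKp, TKm; symmetry; apply filter_length).
  assert (HnT : NoDup TKl) by apply NoDup_nodup.
  assert (Hp : forall x, In x TKp -> realizedP x).
  { intros x Hx. apply filter_In in Hx. destruct Hx as [_ Hx]. apply (proj1 (dec_true _)). auto. }
  assert (Hm : forall x, In x TKm -> realizedM x).
  { intros x Hx. apply filter_In in Hx. destruct Hx as [Hx Hd]. apply Bool.negb_true_iff in Hd.
    apply (proj1 (dec_false _)) in Hd. destruct (TK_realized x Hx) as [m [Pm Wm]].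
    exists m. split; auto. split; auto. destruct (Rle_lt_dec Kq (ar * IZR m ^ 2)).
    - exfalso. apply Hd. exists m. auto.
    - lra. }
  assert (HNp : NoDup TKp) by (apply NoDup_filter; auto).
  assert (HNm : NoDup TKm) by (apply NoDup_filter; auto).
  assert (Bp : INR (length TKp) <= 200 * (K0 + 2) ^ 2 * beta /\ INR (length TKm) <= 200 * (K0 + 2) ^ 2 * beta).
  { destruct (Rlt_le_dec eps (1 / 2)) as [He|He].
    - pose proof (boundA He). split.
      + eapply Rle_trans. apply regimeA_plus; auto. auto.
      + eapply Rle_trans. apply regimeA_minus; auto. auto.
    - pose proof (boundB He). split.
      + eapply Rle_trans. apply regimeB; auto. intros x Hx. destruct (Hp x Hx) as [m [? [? ?]]]. exists m; auto. auto.
      + eapply Rle_trans. apply regimeB; auto. intros x Hx. destruct (Hm x Hx) as [m [? [? ?]]]. exists m; auto. auto. }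
  rewrite Hs, plus_INR in H0. lra.
Qed.

End Count.


Lemma main_result :
    exists fam : Z -> Z -> list ((Z * Z) * nat),
      (forall q a, admissible c1 c2 X M Q q a ->
         NoDup (fam q a) /\
         (INR (length (fam q a)) <= (4000 * (K0 + 2) ^ 2) * M ^ 3 / (X * IZR Q ^ 2 * IZR q))%R /\
         (forall x0 l, In (x0, l) (fam q a) ->
            (1 <= l)%nat /\ (INR l <= H * IZR Q / M)%R /\
            (forall p, in_AP x0 (q, - a)%Z l p -> in_S J X H p))) /\
      (forall p, in_S J X H p ->
         exists q a x0 l, admissible c1 c2 X M Q q a /\
           In (x0, l) (fam q a) /\ in_AP x0 (q, - a)%Z l p) /\
      (forall q a x0 l q' a' x0' l' p,
         admissible c1 c2 X M Q q a -> admissible c1 c2 X M Q q' a' ->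
         In (x0, l) (fam q a) -> In (x0', l') (fam q' a') ->
         in_AP x0 (q, - a)%Z l p -> in_AP x0' (q', - a')%Z l' p ->
         q = q' /\ a = a' /\ x0 = x0' /\ l = l').
Proof.
  exists fam. split; [|split].
  - intros q a Hadm. split; [apply fam_NoDup|]. split.
    + unfold fam. rewrite length_map. pose proof (count_total q a Hadm).
      pose proof (qr_range q a Hadm). pose proof Qr_ge1.
      replace (4000 * (K0 + 2) ^ 2 * M ^ 3 / (X * IZR Q ^ 2 * IZR q)) with (4000 * (K0 + 2) ^ 2 * (M ^ 3 / (X * Qr ^ 2 * IZR q))).
      auto. unfold Qr in *. field. repeat split; lra.
    + intros x0 l Hin. destruct (fam_elem q a (x0, l) Hin) as [i [Hi [_ [Hl Hp]]]]. simpl in Hl, Hp.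
      split; [lia|]. split.
      * apply Rle_trans with (INR L). apply le_INR; lia. apply L_le.
      * intros p Hap. apply Hp in Hap. destruct Hap; auto.
  - intros p HS. destruct (inS_range p HS) as [R1 R2].
    set (q := fst (asg (block (fst p)))). set (a := snd (asg (block (fst p)))).
    exists q, a. set (i := idx q a p).
    assert (Hpc : piece q a i p) by (split; auto; split; auto; unfold q, a; destruct (asg _); auto).
    assert (Hi : In i (IL q a)) by (apply IL_spec; eauto).
    pose proof (RPf_spec ((q, a), i) (ex_intro _ p Hpc)) as [Hl Hp]. simpl in Hp.
    exists (fst (RPf ((q, a), i))), (snd (RPf ((q, a), i))).
    split; [apply adm_region; auto|]. split.
    + unfold fam. apply in_map_iff. exists i. split; auto. destruct (RPf _); auto.
    + apply Hp; auto.
  - intros q a x0 l q' a' x0' l' p A1 A2 H1 H2 P1 P2.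
    destruct (fam_elem q a _ H1) as [i [Hi [Ei [_ Hp1]]]]. simpl in Hp1.
    destruct (fam_elem q' a' _ H2) as [i' [Hi' [Ei' [_ Hp2]]]]. simpl in Hp2.
    apply Hp1 in P1. apply Hp2 in P2.
    destruct P1 as [_ [Ha1 Hi1]]. destruct P2 as [_ [Ha2 Hi2]].
    rewrite Ha1 in Ha2. injection Ha2 as <- <-.
    assert (Eii : i = i') by congruence.
    assert (E : (x0, l) = (x0', l')) by congruence. injection E as <- <-. auto.
Qed.

End Main.

Theorem theorem8p1 :
  forall C0 : R,
  exists c1 c2 C : R, (0 < c1 < c2)%R /\ (0 < C)%R /\
  forall (X H M : R) (J : R -> Prop) (Q : Z),
    (1 <= X)%R -> (1 <= H)%R -> (1 <= M)%R ->
    (Rpower X (1/3) <= H)%R -> (H <= X)%R -> (M <= C0 * sqrt X)%R ->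
    is_interval J -> (forall x, J x -> (M < x <= 2 * M)%R) ->
    (M / H <= IZR Q)%R -> (IZR Q <= M / Rpower (H * X) (1/4))%R ->
    exists fam : Z -> Z -> list ((Z * Z) * nat),
      (forall q a, admissible c1 c2 X M Q q a ->
         NoDup (fam q a) /\
         (INR (length (fam q a)) <= C * M ^ 3 / (X * IZR Q ^ 2 * IZR q))%R /\
         (forall x0 l, In (x0, l) (fam q a) ->
            (1 <= l)%nat /\ (INR l <= H * IZR Q / M)%R /\
            (forall p, in_AP x0 (q, - a)%Z l p -> in_S J X H p))) /\
      (forall p, in_S J X H p ->
         exists q a x0 l, admissible c1 c2 X M Q q a /\
           In (x0, l) (fam q a) /\ in_AP x0 (q, - a)%Z l p) /\
      (forall q a x0 l q' a' x0' l' p,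
         admissible c1 c2 X M Q q a -> admissible c1 c2 X M Q q' a' ->
         In (x0, l) (fam q a) -> In (x0', l') (fam q' a') ->
         in_AP x0 (q, - a)%Z l p -> in_AP x0' (q', - a')%Z l' p ->
         q = q' /\ a = a' /\ x0 = x0' /\ l = l').
Proof.
  intros C0.
  set (C0' := Rmax C0 1).
  assert (HC0' : 1 <= C0') by (unfold C0'; apply Rmax_r).
  set (K0 := 4 * C0' ^ 2).
  assert (HK0 : 1 <= K0) by (unfold K0; nra).
  exists (c1 K0), (c2 K0), (4000 * (K0 + 2) ^ 2).
  split.
  { unfold c1, c2. split. apply div_pos; lra.
    assert (1 / (4 * (K0 + 2)) <= 1) by (apply div_le_r; lra). nra. }
  split. { assert (0 < (K0 + 2) ^ 2) by (apply pow_lt; lra). lra. }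
  intros X H M J Q HX HH HM Hp3 HHX HMC HJ HJr HQlo HQhi.
  assert (HKX : 4 * M ^ 2 <= K0 * X).
  { assert (Hs : 0 <= sqrt X) by apply sqrt_pos.
    assert (HC0 : 0 < C0). { destruct (Rle_lt_dec C0 0); auto. assert (C0 * sqrt X <= 0) by nra. lra. }
    assert (M ^ 2 <= (C0 * sqrt X) ^ 2) by (apply pow_incr; lra).
    rewrite Rpow_mult_distr in H0. rewrite <- Rsqr_pow2 with (x := sqrt X) in H0. rewrite Rsqr_sqrt in H0 by lra.
    assert (C0 <= C0') by (unfold C0'; apply Rmax_l).
    assert (C0 ^ 2 <= C0' ^ 2) by (apply pow_incr; lra).
    unfold K0. assert (0 <= X) by lra. nra. }
  assert (HH3 : X <= H ^ 3).
  { set (r := Rpower X (1 / 3)) in *.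
    assert (Hr : 0 < r) by (unfold r, Rpower; apply exp_pos).
    assert (E : r ^ 3 = X).
    { rewrite <- (Rpower_pow 3 r Hr). unfold r. rewrite Rpower_mult.
      replace (1 / 3 * INR 3) with 1 by (simpl; field). apply Rpower_1. lra. }
    rewrite <- E. apply pow_incr. lra. }
  assert (HQ1 : M <= H * IZR Q).
  { replace M with (M / H * H) at 1 by (field; lra). rewrite (Rmult_comm (M / H)). apply Rmult_le_compat_l; lra. }
  assert (HQ4 : IZR Q ^ 4 * (H * X) <= M ^ 4).
  { set (r := Rpower (H * X) (1 / 4)) in *.
    assert (Hr : 0 < r) by (unfold r, Rpower; apply exp_pos).
    assert (E : r ^ 4 = H * X).
    { rewrite <- (Rpower_pow 4 r Hr). unfold r. rewrite Rpower_mult.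
      replace (1 / 4 * INR 4) with 1 by (simpl; field). apply Rpower_1. nra. }
    assert (HQ0 : 0 <= IZR Q). { assert (0 < M / H) by (apply div_pos; lra). lra. }
    assert (IZR Q * r <= M). { replace M with (M / r * r) by (field; lra). apply Rmult_le_compat_r; lra. }
    assert ((IZR Q * r) ^ 4 <= M ^ 4) by (apply pow_incr; split; [nra|auto]).
    rewrite Rpow_mult_distr, E in H1. auto. }
  exact (main_result X H M K0 J Q HX HH HM HK0 HKX HH3 HQ1 HQ4 HJ HJr).
Qed.
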